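(* Let $a,b\in\mathbb{C}$ with $ab\neq0,\ ab\neq1,\ ab\neq-1$. Then the Lie superalgebra $\Gamma$ defined in the context is isomorphic to the Lie subsuperalgebra of $\mathrm{End}(\tilde{\mathcal{W}}^{2|2})$ spanned by the following matrices (writing $u=\tau^{-1}\circ t^{-1}\in\tilde{\mathcal W}$): $$\tilde C_+=(t\tau)I_4,\quad \tilde C=I_4,\quad \tilde C_-=u\,I_4,$$ $$\tilde E_1=E_{12},\ \tilde F_1=E_{21},\ \tilde H_1=E_{11}-E_{22},\ \tilde E_2=E_{43},\ \tilde F_2=E_{34},\ \tilde H_2=E_{33}-E_{44},$$ $$\tilde T_3=(t\tau)E_{13}+aE_{42},\quad \tilde T_2=-(t\tau)E_{14}+aE_{32},\quad \tilde D_4=(t\tau)E_{24}+aE_{31},\quad \tilde D_1=-(t\tau)E_{23}+aE_{41},$$ $$\tilde T_1=bE_{14}+uE_{32},\quad \tilde T_4=bE_{13}-uE_{42},\quad \tilde D_2=bE_{23}+uE_{41},\quad \tilde D_3=bE_{24}-uE_{31}.$$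
   Context: The Lie superalgebra $\Gamma$ (a contraction of $D(2,1;\alpha)$ as $\alpha\to1$) has basis consisting of odd elements $T_1,T_2,T_3,T_4,D_1,D_2,D_3,D_4$ and even elements $E_1,H_1,F_1,E_2,H_2,F_2,C,C_+,C_-$, with the following nonzero brackets: $[T_1,T_3]=[T_2,T_4]=E_1$; $[D_1,D_3]=[D_2,D_4]=F_1$; $[E_1,D_1]=-2T_3$, $[E_1,D_3]=-2T_1$, $[E_1,D_2]=-2T_4$, $[E_1,D_4]=-2T_2$; $[F_1,T_1]=2D_3$, $[F_1,T_3]=2D_1$, $[F_1,T_2]=2D_4$, $[F_1,T_4]=2D_2$; $[E_2,T_1]=-T_4$, $[E_2,T_2]=T_3$, $[E_2,D_4]=D_1$, $[E_2,D_3]=-D_2$; $[F_2,T_4]=T_1$, $[F_2,T_3]=-T_2$, $[F_2,D_1]=-D_4$, $[F_2,D_2]=D_3$; $[E_1,F_1]=-4H_1$, $[E_2,F_2]=-H_2$, $[H_i,E_i]=2E_i$, $[H_i,F_i]=-2F_i$ ($i=1,2$); $[H_1,T_k]=T_k$, $[H_1,D_k]=-D_k$ ($k=1,\dots,4$); $[H_2,T_1]=-T_1$, $[H_2,T_2]=-T_2$, $[H_2,T_3]=T_3$, $[H_2,T_4]=T_4$, $[H_2,D_1]=D_1$, $[H_2,D_2]=D_2$, $[H_2,D_3]=-D_3$, $[H_2,D_4]=-D_4$; $[T_1,D_4]=-2F_2$, $[T_2,D_3]=2F_2$, $[D_1,T_4]=2E_2$, $[D_2,T_3]=-2E_2$;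 $[T_3,D_4]=C_+$, $[T_4,D_3]=C_-$, $[T_1,D_2]=-C_-$, $[T_2,D_1]=-C_+$; $[T_1,D_1]=H_1+H_2-\tfrac{C}{2}$, $[T_2,D_2]=H_1+H_2+\tfrac{C}{2}$, $[T_3,D_3]=H_1-H_2+\tfrac{C}{2}$, $[T_4,D_4]=H_1-H_2-\tfrac{C}{2}$. Brackets obtained from these by super-antisymmetry $[Y,X]=-(-1)^{p(X)p(Y)}[X,Y]$ are understood, and all other brackets of basis elements are zero (in particular $C,C_+,C_-$ are central). $\tilde{\mathcal W}$ is the associative algebra of pseudodifferential symbols on the circle: formal series $A=\sum_{i=-\infty}^{n}a_i(t)\tau^i$ with $a_i\in\mathbb{C}[t,t^{-1}]$, $n\in\mathbb{Z}$, with product $A\circ B=\sum_{n\ge0}\frac1{n!}\,\partial_\tau^nA\,\partial_t^nB$. $\mathrm{End}(\tilde{\mathcal W}^{2|2})$ is the Lie superalgebra of $4\times4$ matrices over $\tilde{\mathcal W}$, rows/columns $1,2$ even and $3,4$ odd (a matrix is even if entries at $(k,l)$ with $k,l$ of different parity vanish, odd if entries with $k,l$ of the same parity vanish), with matrix product computed using $\circ$ and bracket $[X,Y]=XY-(-1)^{p(X)p(Y)}YX$. $E_{kl}$ is the matrix unit at position $(k,l)$, $wE_{kl}$ has $w\in\tilde{\mathcal W}$ there, and $I_4$ is the identity matrix. *)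

(* Defs.v *)
From HB Require Import structures.
From mathcomp Require Import all_boot all_order all_algebra.
From mathcomp Require Import boolp classical_sets cardinality fsbigop.
Set Implicit Arguments. Unset Strict Implicit. Unset Printing Implicit Defensive.
Import Order.TTheory GRing.Theory Num.Theory.
Local Open Scope ring_scope.

Section Defs.
Variable K : numClosedFieldType.

(* The Lie superalgebra Gamma, as K^17 with basis gb 0 .. gb 16:       *)
(*   T1 T2 T3 T4 D1 D2 D3 D4 | E1 H1 F1 E2 H2 F2 C C+ C-               *)
(*   0  1  2  3  4  5  6  7  | 8  9  10 11 12 13 14 15 16             *)
Definition gb (k : nat) : 'rV[K]_17 := \row_(j < 17) ((j : nat) == k)%:R.
Definition godd (k : nat) : bool := (k < 8)%N.

Definition iT1 := 0%N. Definition iT2 := 1%N. Definition iT3 := 2%N. Definition iT4 := 3%N.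
Definition iD1 := 4%N. Definition iD2 := 5%N. Definition iD3 := 6%N. Definition iD4 := 7%N.
Definition iE1 := 8%N. Definition iH1 := 9%N. Definition iF1 := 10%N.
Definition iE2 := 11%N. Definition iH2 := 12%N. Definition iF2 := 13%N.
Definition iC := 14%N. Definition iCp := 15%N. Definition iCm := 16%N.

(* The nonzero brackets listed in the paper: ([X,Y], value). *)
Definition gtable : seq (nat * nat * 'rV[K]_17) :=
  [:: (iT1, iT3, gb iE1); (iT2, iT4, gb iE1);
      (iD1, iD3, gb iF1); (iD2, iD4, gb iF1);
      (iE1, iD1, (-2) *: gb iT3); (iE1, iD3, (-2) *: gb iT1);
      (iE1, iD2, (-2) *: gb iT4); (iE1, iD4, (-2) *: gb iT2);
      (iF1, iT1, 2 *: gb iD3); (iF1, iT3, 2 *: gb iD1);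
      (iF1, iT2, 2 *: gb iD4); (iF1, iT4, 2 *: gb iD2);
      (iE2, iT1, - gb iT4); (iE2, iT2, gb iT3); (iE2, iD4, gb iD1); (iE2, iD3, - gb iD2);
      (iF2, iT4, gb iT1); (iF2, iT3, - gb iT2); (iF2, iD1, - gb iD4); (iF2, iD2, gb iD3);
      (iE1, iF1, (-4) *: gb iH1); (iE2, iF2, - gb iH2);
      (iH1, iE1, 2 *: gb iE1); (iH1, iF1, (-2) *: gb iF1);
      (iH2, iE2, 2 *: gb iE2); (iH2, iF2, (-2) *: gb iF2);
      (iH1, iT1, gb iT1); (iH1, iT2, gb iT2); (iH1, iT3, gb iT3); (iH1, iT4, gb iT4);
      (iH1, iD1, - gb iD1); (iH1, iD2, - gb iD2); (iH1, iD3, - gb iD3); (iH1, iD4, - gb iD4);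
      (iH2, iT1, - gb iT1); (iH2, iT2, - gb iT2); (iH2, iT3, gb iT3); (iH2, iT4, gb iT4);
      (iH2, iD1, gb iD1); (iH2, iD2, gb iD2); (iH2, iD3, - gb iD3); (iH2, iD4, - gb iD4);
      (iT1, iD4, (-2) *: gb iF2); (iT2, iD3, 2 *: gb iF2);
      (iD1, iT4, 2 *: gb iE2); (iD2, iT3, (-2) *: gb iE2);
      (iT3, iD4, gb iCp); (iT4, iD3, gb iCm); (iT1, iD2, - gb iCm); (iT2, iD1, - gb iCp);
      (iT1, iD1, gb iH1 + gb iH2 - 2^-1 *: gb iC);
      (iT2, iD2, gb iH1 + gb iH2 + 2^-1 *: gb iC);
      (iT3, iD3, gb iH1 - gb iH2 + 2^-1 *: gb iC);
      (iT4, iD4, gb iH1 - gb iH2 - 2^-1 *: gb iC) ].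

Definition gtab (i j : nat) : 'rV[K]_17 :=
  \sum_(e <- gtable | (e.1.1 == i) && (e.1.2 == j)) e.2.

(* [Y,X] = -(-1)^{p(X)p(Y)} [X,Y]; all other brackets vanish.
   (No pair occurs in gtable in both orders, and no [X,X] is listed.) *)
Definition gbr (i j : nat) : 'rV[K]_17 :=
  gtab i j - (if godd i && godd j then -1 else 1) *: gtab j i.

(* Pseudodifferential symbols: s i j = coefficient of t^j tau^i.       *)
Definition symb := int -> int -> K.

Definition is_symbol (s : symb) : Prop :=
  (exists N : int, forall i j, N < i -> s i j = 0) /\
  (forall i, finite_set [set j | s i j != 0]).

Definition szero : symb := fun _ _ => 0.
Definition sconst (c : K) : symb := fun i j => if (i == 0) && (j == 0) then c else 0.
Definition smono (m n : int) : symb := fun i j => if (i == n) && (j == m) then 1 else 0.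
Definition sadd (A B : symb) : symb := fun i j => A i j + B i j.
Definition sopp (A : symb) : symb := fun i j => - A i j.
Definition sscale (c : K) (A : symb) : symb := fun i j => c * A i j.

Definition ffact (x : int) (n : nat) : K := \prod_(m < n) (x%:~R - m%:R).

(* A o B = sum_{n>=0} 1/n! d_tau^n A d_t^n B.  The coefficient of
   t^l tau^k collects the terms a_{i,j} t^j tau^i (from A) and
   b_{i',j'} t^j' tau^i' (from B) with i + i' - n = k, j + j' - n = l.
   For genuine symbols only finitely many terms are nonzero. *)
Definition sprod (A B : symb) : symb := fun k l =>
  (\sum_(p \in [set: nat * int * int])
     (let: (n, i, j) := p in
      ffact i n * ffact (l + n%:Z - j) n / (n`!)%:R
      * A i j * B (k + n%:Z - i) (l + n%:Z - j)))%R.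

(* End(W~^{2|2}): 4x4 matrices over W~, rows/columns 0,1 even, 2,3 odd *)
(* (paper's 1,2 even and 3,4 odd).                                     *)
Definition smat := 'I_4 -> 'I_4 -> symb.

Definition rpar (k : 'I_4) : bool := (2 <= k)%N. (* true = odd *)
Definition meven (X : smat) : Prop := forall k l, rpar k != rpar l -> X k l = szero.
Definition modd (X : smat) : Prop := forall k l, rpar k == rpar l -> X k l = szero.
Definition mhomog (p : bool) (X : smat) : Prop := if p then modd X else meven X.

Definition mzero : smat := fun _ _ => szero.
Definition madd (X Y : smat) : smat := fun k l => sadd (X k l) (Y k l).
Definition mscale (c : K) (X : smat) : smat := fun k l => sscale c (X k l).
Definition mmul (X Y : smat) : smat := fun k l =>
  \big[sadd/szero]_(m < 4) sprod (X k m) (Y m l).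

Definition mbr (p q : bool) (X Y : smat) : smat :=
  madd (mmul X Y) (mscale (if p && q then 1 else -1) (mmul Y X)).

(* w E_{kl}, with paper's 1-based indices k, l *)
Definition Emat (k l : nat) (w : symb) : smat := fun a b =>
  if ((a : nat).+1 == k) && ((b : nat).+1 == l) then w else szero.
Definition Ediag (w : symb) : smat := fun a b => if a == b then w else szero.

Definition ttau : symb := smono 1 1.
Definition usym : symb := sprod (smono 0 (-1)) (smono (-1) 0).
Definition cst (c : K) : symb := sconst c.

(* The 17 matrices, in the same order as the basis of Gamma. *)
Definition tildeX (a b : K) (k : nat) : smat :=
  match k with
  | 0 => madd (Emat 1 4 (cst b)) (Emat 3 2 usym)
  | 1 => madd (Emat 1 4 (sopp ttau)) (Emat 3 2 (cst a))
  | 2 => madd (Emat 1 3 ttau) (Emat 4 2 (cst a))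
  | 3 => madd (Emat 1 3 (cst b)) (Emat 4 2 (sopp usym))
  | 4 => madd (Emat 2 3 (sopp ttau)) (Emat 4 1 (cst a))
  | 5 => madd (Emat 2 3 (cst b)) (Emat 4 1 usym)
  | 6 => madd (Emat 2 4 (cst b)) (Emat 3 1 (sopp usym))
  | 7 => madd (Emat 2 4 ttau) (Emat 3 1 (cst a))
  | 8 => Emat 1 2 (cst 1)
  | 9 => madd (Emat 1 1 (cst 1)) (Emat 2 2 (cst (-1)))
  | 10 => Emat 2 1 (cst 1)
  | 11 => Emat 4 3 (cst 1)
  | 12 => madd (Emat 3 3 (cst 1)) (Emat 4 4 (cst (-1)))
  | 13 => Emat 3 4 (cst 1)
  | 14 => Ediag (cst 1)
  | 15 => Ediag ttau
  | 16 => Ediag usym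
  | _ => mzero
  end.

Definition in_span (a b : K) (X : smat) : Prop :=
  exists c : 'I_17 -> K,
    X = \big[madd/mzero]_(k < 17) mscale (c k) (tildeX a b k).

End Defs.

(* Main.v *)
Require Import Defs.
From HB Require Import structures.
From mathcomp Require Import all_boot all_order all_algebra.
From mathcomp Require Import boolp classical_sets cardinality fsbigop.
From mathcomp Require Import finmap ring lra zify.
Import GRing.Theory Num.Theory.
Local Open Scope ring_scope.

Lemma ffact0 (K : numClosedFieldType) x : ffact K x 0 = 1.
Proof. by rewrite /ffact big_ord0. Qed.

Lemma ffact1 (K : numClosedFieldType) x : ffact K x 1 = x%:~R.
Proof. by rewrite /ffact big_ord1 subr0. Qed.

Lemma ffact_gt (K : numClosedFieldType) (m n : nat) : (m < n)%N -> ffact K m n = 0.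
Proof.
move=> H; rewrite /ffact (bigD1 (Ordinal H)) //= subrr mul0r //.
Qed.

Lemma ffactm1 (K : numClosedFieldType) n : ffact K (-1) n = (-1) ^+ n * (n`!)%:R.
Proof.
elim: n => [|n IH]; first by rewrite ffact0 expr0 mul1r.
rewrite /ffact big_ord_recr /= -/(ffact K (-1) n) IH factS natrM exprS.
rewrite -[(-1 : int)%:~R]/(-1 : K)%R. rewrite mulrSr. ring.
Qed.


Lemma sprodZl (K : numClosedFieldType) c (A B : symb K) :
  sprod (sscale c A) B = sscale c (sprod A B).
Proof.
apply/funext => k; apply/funext => l; rewrite /sprod /sscale mulr_fsumr.
by apply: eq_fsbigr => -[[n i] j] _; ring.
Qed.

Lemma sprodZr (K : numClosedFieldType) c (A B : symb K) :
  sprod A (sscale c B) = sscale c (sprod A B).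
Proof.
apply/funext => k; apply/funext => l; rewrite /sprod /sscale mulr_fsumr.
by apply: eq_fsbigr => -[[n i] j] _; ring.
Qed.

Lemma sprod0l (K : numClosedFieldType) (B : symb K) : sprod (szero K) B = szero K.
Proof.
apply/funext => k; apply/funext => l; rewrite /sprod /szero fsbig1 //.
by move=> -[[n i] j] _; rewrite !(mulr0, mul0r).
Qed.

Lemma sprod0r (K : numClosedFieldType) (A : symb K) : sprod A (szero K) = szero K.
Proof.
apply/funext => k; apply/funext => l; rewrite /sprod /szero fsbig1 //.
by move=> -[[n i] j] _; rewrite !(mulr0, mul0r).
Qed.

Definition sone (K : numClosedFieldType) : symb K := sconst 1.

Lemma sprod1l (K : numClosedFieldType) (B : symb K) : sprod (sone K) B = B.
Proof.
apply/funext => k; apply/funext => l; rewrite /sprod.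
rewrite (fsbigTE [fset (0%N, 0%Z, 0%Z)]%fset); last first.
  move=> -[[n i] j]; rewrite inE /sone /sconst.
  case: n => [|n].
    by case: (i =P 0) => [->|_]; case: (j =P 0) => [->|_] //=; rewrite !(mulr0, mul0r).
  by case: (i =P 0) => [->|_]; [rewrite ffact_gt // !mul0r | rewrite /= !mulr0 !mul0r].
rewrite big_seq_fset1 /= /sone /sconst /= !ffact0 !addr0 /=.
by rewrite fact0 divr1 !mul1r.
Qed.

Lemma sprod1r (K : numClosedFieldType) (A : symb K) : sprod A (sone K) = A.
Proof.
apply/funext => k; apply/funext => l; rewrite /sprod.
rewrite (fsbigTE [fset (0%N, k, l)]%fset); last first.
  move=> -[[n i] j]; rewrite inE /sone /sconst => Hn.
  case: (k + n%:Z - i =P 0) => [E1|_]; last by rewrite /= !mulr0.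
  case: (l + n%:Z - j =P 0) => [E2|_]; last by rewrite andbF /= !mulr0.
  case: n Hn E1 E2 => [|n] Hn E1 E2.
    exfalso; move/negP: Hn; apply; apply/eqP.
    by congr (_, _, _); lia.
  by rewrite E2 ffact_gt // mulr0 !mul0r.
rewrite big_seq_fset1 /= /sone /sconst /= !ffact0 !addr0 !subrr /=.
by rewrite divr1 !mul1r mulr1.
Qed.


Lemma factr_neq0 (K : numClosedFieldType) n : (n`!)%:R != 0 :> K.
Proof. by rewrite pnatr_eq0 -lt0n fact_gt0. Qed.

Lemma usymE (K : numClosedFieldType) k l :
  usym K k l = if (k == l) && (k < 0) then (((absz k).-1)`!)%:R else 0.
Proof.
rewrite /usym /sprod /smono.
case: ifP => [/andP[/eqP <- kneg]|H].
  rewrite (fsbigTE [fset ((absz k).-1, -1%Z, 0%Z)]%fset); last first.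
    move=> -[[n i] j]; rewrite inE => Hn.
    case: (i =P -1) => [Ei|_]; last by rewrite /= !mulr0 mul0r.
    case: (j =P 0) => [Ej|_]; last by rewrite /= !mulr0 mul0r.
    case: (k + n%:Z - i =P 0) => [E1|_]; last by rewrite /= !mulr0.
    case: (k + n%:Z - j =P -1) => [E2|_]; last by rewrite /= !mulr0.
    exfalso; move/negP: Hn; apply; apply/eqP.
    subst; congr (_, _, _); lia.
  rewrite big_seq_fset1 /=.
  have -> : k + ((absz k).-1)%:Z - - 1%Z = 0 by lia.
  have -> : k + ((absz k).-1)%:Z - 0%Z = -1 by lia.
  rewrite !eqxx /= !mulr1 !ffactm1.
  have F := factr_neq0 K (absz k).-1.
  have S : ((-1) ^+ (absz k).-1 * (-1) ^+ (absz k).-1 : K) = 1.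
    by rewrite -exprMn mulrNN mulr1 expr1n.
  set x := (-1) ^+ _ in S *; set y := _%:R in F *.
  by rewrite mulrACA S mul1r mulfK.
rewrite fsbig1 // => -[[n i] j] _.
case: (i =P -1) => [Ei|_]; last by rewrite /= !mulr0 mul0r.
case: (j =P 0) => [Ej|_]; last by rewrite /= !mulr0 mul0r.
case: (k + n%:Z - i =P 0) => [E1|_]; last by rewrite /= !mulr0.
case: (l + n%:Z - j =P -1) => [E2|_]; last by rewrite /= !mulr0.
exfalso; move/negP: H; apply; subst; apply/andP; split; [apply/eqP|]; lia.
Qed.


Lemma key (K : numClosedFieldType) (k l : int) :
  usym K (k - 1) (l - 1) + l%:~R * usym K k l = sone K k l.
Proof.
rewrite !usymE /sone /sconst.
case: (eqVneq k l) => [<-|kl]; last first.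
  have -> : (k - 1 == l - 1) = false by apply/eqP => E; move/eqP: kl; apply; lia.
  by rewrite /= mulr0 addr0; case: (k =P 0) => [E|] //; case: (l =P 0) => //; lia.
rewrite !eqxx /=.
case: k => [[|m]|m].
- have -> : (0%:Z - 1 < 0) = true by [].
  by rewrite /= fact0 mulr0 addr0.
- have -> : ((m.+1)%:Z - 1 < 0) = false by apply/negbTE; rewrite -Order.TotalTheory.leNgt; lia.
  by rewrite /= mulr0 addr0.
- have -> : (Negz m - 1 < 0) = true by lia.
  have -> : (Negz m < 0) = true by [].
  have -> : (absz (Negz m - 1)).-1 = m.+1 by lia.
  rewrite /= factS natrM NegzE.
  rewrite mulrNz. ring.
Qed.


Lemma sprod_tu (K : numClosedFieldType) : sprod (ttau K) (usym K) = sone K.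
Proof.
apply/funext => k; apply/funext => l; rewrite /sprod.
rewrite (fsbigE [:: (0%N, 1%Z, 1%Z); (1%N, 1%Z, 1%Z)]) //; last first.
  move=> -[[n i] j] _; rewrite !inE /ttau /smono => Hn.
  case: (i =P 1) => [Ei|_]; last by rewrite /= !mulr0 mul0r.
  case: (j =P 1) => [Ej|_]; last by rewrite /= !mulr0 mul0r.
  subst; case: n Hn => [|[|n]] Hn //.
  by rewrite ffact_gt // !mul0r.
rewrite !big_cons big_nil !classical_sets.in_setT /= /ttau /smono /=.
have -> : k + 0%:Z - 1 = k - 1 by lia.
have -> : l + 0%:Z - 1 = l - 1 by lia.
have -> : k + 1%:Z - 1 = k by lia.
have -> : l + 1%:Z - 1 = l by lia.
rewrite !ffact0 !ffact1 fact0 factS fact0 !divr1 !mul1r !mulr1 addr0.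
exact: key.
Qed.

Lemma sprod_ut (K : numClosedFieldType) : sprod (usym K) (ttau K) = sone K.
Proof.
apply/funext => k; apply/funext => l; rewrite /sprod.
rewrite (fsbigE [:: (0%N, k - 1, l - 1); (1%N, k, l)]) //; last first.
  move=> -[[n i] j] _; rewrite !inE /ttau /smono => Hn.
  case: (k + n%:Z - i =P 1) => [Ei|_]; last by rewrite /= !mulr0.
  case: (l + n%:Z - j =P 1) => [Ej|_]; last by rewrite andbF /= !mulr0.
  rewrite Ej; case: n Hn Ei Ej => [|[|n]] Hn Ei Ej.
  - exfalso; move/negP: Hn; apply; apply/orP; left; apply/eqP.
    congr (_, _, _); lia.
  - exfalso; move/negP: Hn; apply; apply/orP; right; apply/eqP.
    congr (_, _, _); lia.
  by rewrite ffact_gt // mulr0 !mul0r.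
rewrite !big_cons big_nil !classical_sets.in_setT /= /ttau /smono /=.
have -> : k + 0%:Z - (k - 1) = 1 by lia.
have -> : l + 0%:Z - (l - 1) = 1 by lia.
have -> : k + 1%:Z - k = 1 by lia.
have -> : l + 1%:Z - l = 1 by lia.
rewrite !eqxx /= ffact0 ffact1 fact0 factS fact0 !divr1 !mul1r !mulr1 mulrC.
have H : k%:~R * usym K k l = l%:~R * usym K k l.
  by rewrite usymE; case: (eqVneq k l) => [->|kl] //=; rewrite !mulr0.
rewrite -(key K k l) -H !ffact0 !ffact1; ring.
Qed.


Definition wt {K : numClosedFieldType} (a b : K) (m : nat) : K :=
  let kp := (a * b + 1)^-1 in
  match m with
  | 0 | 1 | 2 | 3 => 1
  | 4 | 7 => 2 * kp
  | 5 | 6 => -2 * kp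
  | 8 => a * b + 1
  | 9 => 1
  | 10 => -4 * kp
  | 11 => 1
  | 12 | 13 => -1
  | 14 => -2 * (a * b - 1) * kp
  | 15 => 2 * a * kp
  | 16 => 2 * b * kp
  | _ => 0
  end.

Definition fmap {K : numClosedFieldType} (a b : K) (x : 'rV[K]_17) : smat K :=
  fun k l p q => \sum_(m < 17) wt a b m * x ord0 m * tildeX a b m k l p q.

Lemma fD (K : numClosedFieldType) (a b : K) x y :
  fmap a b (x + y) = madd (fmap a b x) (fmap a b y).
Proof.
do 4 apply/funext => ?; rewrite /fmap /madd /sadd -big_split /=.
by apply: eq_bigr => m _; rewrite mxE; ring.
Qed.

Lemma fZ (K : numClosedFieldType) (a b : K) c x :
  fmap a b (c *: x) = mscale c (fmap a b x).
Proof.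
do 4 apply/funext => ?; rewrite /fmap /mscale /sscale mulr_sumr /=.
by apply: eq_bigr => m _; rewrite mxE; ring.
Qed.

Lemma f0 (K : numClosedFieldType) (a b : K) : fmap a b 0 = mzero K.
Proof.
do 4 apply/funext => ?; rewrite /fmap /mzero /szero big1 // => m _.
by rewrite mxE; ring.
Qed.

Lemma fN (K : numClosedFieldType) (a b : K) x :
  fmap a b (- x) = mscale (-1) (fmap a b x).
Proof. by rewrite -scaleN1r fZ. Qed.

Lemma fgb (K : numClosedFieldType) (a b : K) (n : nat) : (n < 17)%N ->
  fmap a b (gb K n) = mscale (wt a b n) (tildeX a b n).
Proof.
move=> Hn; do 4 apply/funext => ?; rewrite /fmap /mscale /sscale.
rewrite (bigD1 (Ordinal Hn)) //= big1 ?addr0.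
  by rewrite /gb mxE eqxx mulr1.
move=> m Hm; rewrite /gb mxE.
case: eqP => E; last by rewrite mulr0 mul0r.
by exfalso; move/eqP: Hm; apply; apply/val_inj.
Qed.


Lemma sadd0r (K : numClosedFieldType) (A : symb K) : sadd (szero K) A = A.
Proof. by do 2 apply/funext => ?; rewrite /sadd /szero add0r. Qed.
Lemma saddr0 (K : numClosedFieldType) (A : symb K) : sadd A (szero K) = A.
Proof. by do 2 apply/funext => ?; rewrite /sadd /szero addr0. Qed.
Lemma cstE (K : numClosedFieldType) (c : K) : cst c = sscale c (sone K).
Proof.
do 2 apply/funext => ?; rewrite /cst /sone /sconst /sscale.
by case: ifP; rewrite ?mulr1 ?mulr0.
Qed.
Lemma soppE (K : numClosedFieldType) (A : symb K) : sopp A = sscale (-1) A.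
Proof. by do 2 apply/funext => ?; rewrite /sopp /sscale mulN1r. Qed.

Definition mypred {K : numClosedFieldType} (i j : nat) (e : nat * nat * 'rV[K]_17) := 
  eqn e.1.1 i && eqn e.1.2 j.
Lemma gtabE (K : numClosedFieldType) i j :
  gtab K i j = \sum_(e <- filter (mypred i j) (gtable K)) e.2.
Proof. by rewrite big_filter. Qed.



Inductive bat := B0 | B1 | BT | BU.
Inductive atm := AZ | A1 | AT | AU | ATT | AUU.

Definition emb (x : bat) : atm := match x with B0 => AZ | B1 => A1 | BT => AT | BU => AU end.

Definition den {K : numClosedFieldType} (x : atm) : symb K :=
  match x with
  | AZ => szero K | A1 => sone K | AT => ttau K | AU => usym K
  | ATT => sprod (ttau K) (ttau K) | AUU => sprod (usym K) (usym K) end.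

Definition mulb (x y : bat) : atm :=
  match x, y with
  | B0, _ => AZ | _, B0 => AZ
  | B1, y => emb y | x, B1 => emb x
  | BT, BT => ATT | BT, BU => A1 | BU, BT => A1 | BU, BU => AUU end.

Lemma sprod_den (K : numClosedFieldType) x y :
  sprod (@den K (emb x)) (den (emb y)) = den (mulb x y).
Proof.
case: x; case: y => /=;
rewrite ?sprod0l ?sprod0r ?sprod1l ?sprod1r ?sprod_tu ?sprod_ut //.
Qed.

Definition tx {K : numClosedFieldType} (a b : K) (n k l : nat) : K * bat :=
  match n with
  | 0 => match k, l with 0, 3 => (b, B1) | 2, 1 => (1, BU) | _, _ => (0, B0) end
  | 1 => match k, l with 0, 3 => (-1, BT) | 2, 1 => (a, B1) | _, _ => (0, B0) end
  | 2 => match k, l with 0, 2 => (1, BT) | 3, 1 => (a, B1) | _, _ => (0, B0) end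
  | 3 => match k, l with 0, 2 => (b, B1) | 3, 1 => (-1, BU) | _, _ => (0, B0) end
  | 4 => match k, l with 1, 2 => (-1, BT) | 3, 0 => (a, B1) | _, _ => (0, B0) end
  | 5 => match k, l with 1, 2 => (b, B1) | 3, 0 => (1, BU) | _, _ => (0, B0) end
  | 6 => match k, l with 1, 3 => (b, B1) | 2, 0 => (-1, BU) | _, _ => (0, B0) end
  | 7 => match k, l with 1, 3 => (1, BT) | 2, 0 => (a, B1) | _, _ => (0, B0) end
  | 8 => match k, l with 0, 1 => (1, B1) | _, _ => (0, B0) end
  | 9 => match k, l with 0, 0 => (1, B1) | 1, 1 => (-1, B1) | _, _ => (0, B0) end
  | 10 => match k, l with 1, 0 => (1, B1) | _, _ => (0, B0) end
  | 11 => match k, l with 3, 2 => (1, B1) | _, _ => (0, B0) end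
  | 12 => match k, l with 2, 2 => (1, B1) | 3, 3 => (-1, B1) | _, _ => (0, B0) end
  | 13 => match k, l with 2, 3 => (1, B1) | _, _ => (0, B0) end
  | 14 => match k, l with 0, 0 | 1, 1 | 2, 2 | 3, 3 => (1, B1) | _, _ => (0, B0) end
  | 15 => match k, l with 0, 0 | 1, 1 | 2, 2 | 3, 3 => (1, BT) | _, _ => (0, B0) end
  | 16 => match k, l with 0, 0 | 1, 1 | 2, 2 | 3, 3 => (1, BU) | _, _ => (0, B0) end
  | _ => (0, B0)
  end.

Lemma tXp (K : numClosedFieldType) (a b : K) (n : nat) (k l : 'I_4) p q : (n < 17)%N ->
  tildeX a b n k l p q = (tx a b n k l).1 * den (emb (tx a b n k l).2) p q.
Proof.
move=> Hn.
case: k => -[|[|[|[|k]]]] Hk //; case: l => -[|[|[|[|l]]]] Hl //;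
do 17 (case: n Hn => [|n] Hn; [rewrite /tildeX /Emat /Ediag /madd /mzero /= ;
   rewrite ?(sadd0r, saddr0, cstE, soppE) /sscale /szero /=; ring|]); done.
Qed.


Lemma big_sadd_pt (K : numClosedFieldType) (F : 'I_4 -> symb K) p q :
  (\big[@sadd K/szero K]_(m < 4) F m) p q = \sum_(m < 4) F m p q.
Proof. by rewrite !big_ord_recl !big_ord0 /sadd /szero. Qed.

Lemma sum4 (K : numClosedFieldType) (G : nat -> K) :
  \sum_(m < 4) G m = G 0%N + G 1%N + G 2%N + G 3%N.
Proof. by rewrite !big_ord_recl big_ord0 /= addr0 !addrA. Qed.

Lemma mmulE0 (K : numClosedFieldType) (a b : K) (i j : nat) (k l : 'I_4) p q :
  (i < 17)%N -> (j < 17)%N ->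
  mmul (mscale (wt a b i) (tildeX a b i)) (mscale (wt a b j) (tildeX a b j)) k l p q =
  \sum_(m < 4) (wt a b i * wt a b j * (tx a b i k m).1 * (tx a b j m l).1 *
      den (mulb (tx a b i k m).2 (tx a b j m l).2) p q).
Proof.
move=> Hi Hj; rewrite /mmul big_sadd_pt; apply: eq_bigr => m _.
have -> : mscale (wt a b i) (tildeX a b i) k m =
   sscale (wt a b i * (tx a b i k m).1) (den (emb (tx a b i k m).2)).
  by do 2 apply/funext => ?; rewrite /mscale /sscale tXp // mulrA.
have -> : mscale (wt a b j) (tildeX a b j) m l =
   sscale (wt a b j * (tx a b j m l).1) (den (emb (tx a b j m l).2)).
  by do 2 apply/funext => ?; rewrite /mscale /sscale tXp // mulrA.
by rewrite sprodZl sprodZr sprod_den /sscale; ring.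
Qed.

Lemma mmulE (K : numClosedFieldType) (a b : K) (i j : nat) (k l : 'I_4) p q :
  (i < 17)%N -> (j < 17)%N ->
  mmul (mscale (wt a b i) (tildeX a b i)) (mscale (wt a b j) (tildeX a b j)) k l p q =
  let G := fun m : nat => (wt a b i * wt a b j * (tx a b i k m).1 * (tx a b j m l).1 *
      den (mulb (tx a b i k m).2 (tx a b j m l).2) p q) in
  G 0%N + G 1%N + G 2%N + G 3%N.
Proof.
move=> Hi Hj; rewrite mmulE0 //.
by rewrite !big_ord_recl big_ord0 /= addr0 !addrA.
Qed.

Definition etval {K : numClosedFieldType} (c : K * bat) (p q : int) : K :=
  match c.2 with B0 => 0 | t => c.1 * @den K (emb t) p q end.

Definition pval {K : numClosedFieldType} (c d : K * bat) (p q : int) : K :=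
  match c.2, d.2 with B0, _ => 0 | _, B0 => 0 | s, t => c.1 * d.1 * @den K (mulb s t) p q end.

Lemma tXq (K : numClosedFieldType) (a b : K) (n : nat) (k l : 'I_4) p q : (n < 17)%N ->
  tildeX a b n k l p q = etval (tx a b n k l) p q.
Proof. by move=> Hn; rewrite tXp // /etval; case: (tx a b n k l) => c [] //=; rewrite mulr0. Qed.

Lemma pvalE (K : numClosedFieldType) (c d : K * bat) p q :
  c.1 * d.1 * den (mulb c.2 d.2) p q = pval c d p q.
Proof. by case: c d => c [] [d []] //=; rewrite ?mulr0. Qed.

Lemma mmulF (K : numClosedFieldType) (a b : K) (i j : nat) (k l : 'I_4) p q :
  (i < 17)%N -> (j < 17)%N ->
  mmul (mscale (wt a b i) (tildeX a b i)) (mscale (wt a b j) (tildeX a b j)) k l p q =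
  wt a b i * wt a b j * (pval (tx a b i k 0) (tx a b j 0 l) p q + pval (tx a b i k 1) (tx a b j 1 l) p q
    + pval (tx a b i k 2) (tx a b j 2 l) p q + pval (tx a b i k 3) (tx a b j 3 l) p q).
Proof.
move=> Hi Hj; rewrite mmulE //= -!pvalE; ring.
Qed.

Lemma mbrE (K : numClosedFieldType) s1 s2 (X Y : smat K) k l p q :
  mbr s1 s2 X Y k l p q = mmul X Y k l p q + (if s1 && s2 then 1 else -1) * mmul Y X k l p q.
Proof. by []. Qed.

Lemma leb_leq (m n : nat) : Nat.leb m n = (m <= n)%N.
Proof. by elim: m n => [|m IH] [|n] //=; rewrite IH. Qed.

Lemma goddE n : godd n = Nat.leb (S n) 8.
Proof. by rewrite leb_leq. Qed.

Ltac gcomp := cbv beta iota zeta delta [andb filter gtable mypred eqn fst snd iT1 iT2 iT3 iT4 iD1 iD2 iD3 iD4 iE1 iF1 iH1 iE2 iF2 iH2 iC iCp iCm Nat.leb].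

Ltac brtac :=
  rewrite /gbr !goddE !gtabE; gcomp;
  rewrite ?big_cons !big_nil !(fD, fZ, fN, f0, fgb) //;
  let k := fresh "k" in let l := fresh "l" in
  apply/funext; intro k; apply/funext; intro l; apply/funext => ?; apply/funext => ?;
  rewrite mbrE !mmulF // /madd /mscale /mzero /sadd /sscale /szero ?tXq //;
  case: k => -[|[|[|[|?]]]] ? //; case: l => -[|[|[|[|?]]]] ? //;
  cbv beta iota zeta delta [tx mulb emb den szero nat_of_ord Nat.leb andb wt fst snd etval pval];
  first [ring | field; by []].



Lemma br_0_0 (K : numClosedFieldType) (a b : K) (hk : a * b + 1 != 0) (h2 : (2 : K) != 0) :
  fmap a b (gbr K 0 0) = mbr (godd 0) (godd 0) (fmap a b (gb K 0)) (fmap a b (gb K 0)).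
Proof. brtac. Qed.

Lemma br_0_1 (K : numClosedFieldType) (a b : K) (hk : a * b + 1 != 0) (h2 : (2 : K) != 0) :
  fmap a b (gbr K 0 1) = mbr (godd 0) (godd 1) (fmap a b (gb K 0)) (fmap a b (gb K 1)).
Proof. brtac. Qed.

Lemma br_0_2 (K : numClosedFieldType) (a b : K) (hk : a * b + 1 != 0) (h2 : (2 : K) != 0) :
  fmap a b (gbr K 0 2) = mbr (godd 0) (godd 2) (fmap a b (gb K 0)) (fmap a b (gb K 2)).
Proof. brtac. Qed.

Lemma br_0_3 (K : numClosedFieldType) (a b : K) (hk : a * b + 1 != 0) (h2 : (2 : K) != 0) :
  fmap a b (gbr K 0 3) = mbr (godd 0) (godd 3) (fmap a b (gb K 0)) (fmap a b (gb K 3)).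
Proof. brtac. Qed.

Lemma br_0_4 (K : numClosedFieldType) (a b : K) (hk : a * b + 1 != 0) (h2 : (2 : K) != 0) :
  fmap a b (gbr K 0 4) = mbr (godd 0) (godd 4) (fmap a b (gb K 0)) (fmap a b (gb K 4)).
Proof. brtac. Qed.

Lemma br_0_5 (K : numClosedFieldType) (a b : K) (hk : a * b + 1 != 0) (h2 : (2 : K) != 0) :
  fmap a b (gbr K 0 5) = mbr (godd 0) (godd 5) (fmap a b (gb K 0)) (fmap a b (gb K 5)).
Proof. brtac. Qed.

Lemma br_0_6 (K : numClosedFieldType) (a b : K) (hk : a * b + 1 != 0) (h2 : (2 : K) != 0) :
  fmap a b (gbr K 0 6) = mbr (godd 0) (godd 6) (fmap a b (gb K 0)) (fmap a b (gb K 6)).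
Proof. brtac. Qed.

Lemma br_0_7 (K : numClosedFieldType) (a b : K) (hk : a * b + 1 != 0) (h2 : (2 : K) != 0) :
  fmap a b (gbr K 0 7) = mbr (godd 0) (godd 7) (fmap a b (gb K 0)) (fmap a b (gb K 7)).
Proof. brtac. Qed.

Lemma br_0_8 (K : numClosedFieldType) (a b : K) (hk : a * b + 1 != 0) (h2 : (2 : K) != 0) :
  fmap a b (gbr K 0 8) = mbr (godd 0) (godd 8) (fmap a b (gb K 0)) (fmap a b (gb K 8)).
Proof. brtac. Qed.

Lemma br_0_9 (K : numClosedFieldType) (a b : K) (hk : a * b + 1 != 0) (h2 : (2 : K) != 0) :
  fmap a b (gbr K 0 9) = mbr (godd 0) (godd 9) (fmap a b (gb K 0)) (fmap a b (gb K 9)).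
Proof. brtac. Qed.

Lemma br_0_10 (K : numClosedFieldType) (a b : K) (hk : a * b + 1 != 0) (h2 : (2 : K) != 0) :
  fmap a b (gbr K 0 10) = mbr (godd 0) (godd 10) (fmap a b (gb K 0)) (fmap a b (gb K 10)).
Proof. brtac. Qed.

Lemma br_0_11 (K : numClosedFieldType) (a b : K) (hk : a * b + 1 != 0) (h2 : (2 : K) != 0) :
  fmap a b (gbr K 0 11) = mbr (godd 0) (godd 11) (fmap a b (gb K 0)) (fmap a b (gb K 11)).
Proof. brtac. Qed.

Lemma br_0_12 (K : numClosedFieldType) (a b : K) (hk : a * b + 1 != 0) (h2 : (2 : K) != 0) :
  fmap a b (gbr K 0 12) = mbr (godd 0) (godd 12) (fmap a b (gb K 0)) (fmap a b (gb K 12)).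
Proof. brtac. Qed.

Lemma br_0_13 (K : numClosedFieldType) (a b : K) (hk : a * b + 1 != 0) (h2 : (2 : K) != 0) :
  fmap a b (gbr K 0 13) = mbr (godd 0) (godd 13) (fmap a b (gb K 0)) (fmap a b (gb K 13)).
Proof. brtac. Qed.

Lemma br_0_14 (K : numClosedFieldType) (a b : K) (hk : a * b + 1 != 0) (h2 : (2 : K) != 0) :
  fmap a b (gbr K 0 14) = mbr (godd 0) (godd 14) (fmap a b (gb K 0)) (fmap a b (gb K 14)).
Proof. brtac. Qed.

Lemma br_0_15 (K : numClosedFieldType) (a b : K) (hk : a * b + 1 != 0) (h2 : (2 : K) != 0) :
  fmap a b (gbr K 0 15) = mbr (godd 0) (godd 15) (fmap a b (gb K 0)) (fmap a b (gb K 15)).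
Proof. brtac. Qed.

Lemma br_0_16 (K : numClosedFieldType) (a b : K) (hk : a * b + 1 != 0) (h2 : (2 : K) != 0) :
  fmap a b (gbr K 0 16) = mbr (godd 0) (godd 16) (fmap a b (gb K 0)) (fmap a b (gb K 16)).
Proof. brtac. Qed.

Lemma br_1_1 (K : numClosedFieldType) (a b : K) (hk : a * b + 1 != 0) (h2 : (2 : K) != 0) :
  fmap a b (gbr K 1 1) = mbr (godd 1) (godd 1) (fmap a b (gb K 1)) (fmap a b (gb K 1)).
Proof. brtac. Qed.

Lemma br_1_2 (K : numClosedFieldType) (a b : K) (hk : a * b + 1 != 0) (h2 : (2 : K) != 0) :
  fmap a b (gbr K 1 2) = mbr (godd 1) (godd 2) (fmap a b (gb K 1)) (fmap a b (gb K 2)).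
Proof. brtac. Qed.

Lemma br_1_3 (K : numClosedFieldType) (a b : K) (hk : a * b + 1 != 0) (h2 : (2 : K) != 0) :
  fmap a b (gbr K 1 3) = mbr (godd 1) (godd 3) (fmap a b (gb K 1)) (fmap a b (gb K 3)).
Proof. brtac. Qed.

Lemma br_1_4 (K : numClosedFieldType) (a b : K) (hk : a * b + 1 != 0) (h2 : (2 : K) != 0) :
  fmap a b (gbr K 1 4) = mbr (godd 1) (godd 4) (fmap a b (gb K 1)) (fmap a b (gb K 4)).
Proof. brtac. Qed.

Lemma br_1_5 (K : numClosedFieldType) (a b : K) (hk : a * b + 1 != 0) (h2 : (2 : K) != 0) :
  fmap a b (gbr K 1 5) = mbr (godd 1) (godd 5) (fmap a b (gb K 1)) (fmap a b (gb K 5)).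
Proof. brtac. Qed.

Lemma br_1_6 (K : numClosedFieldType) (a b : K) (hk : a * b + 1 != 0) (h2 : (2 : K) != 0) :
  fmap a b (gbr K 1 6) = mbr (godd 1) (godd 6) (fmap a b (gb K 1)) (fmap a b (gb K 6)).
Proof. brtac. Qed.

Lemma br_1_7 (K : numClosedFieldType) (a b : K) (hk : a * b + 1 != 0) (h2 : (2 : K) != 0) :
  fmap a b (gbr K 1 7) = mbr (godd 1) (godd 7) (fmap a b (gb K 1)) (fmap a b (gb K 7)).
Proof. brtac. Qed.

Lemma br_1_8 (K : numClosedFieldType) (a b : K) (hk : a * b + 1 != 0) (h2 : (2 : K) != 0) :
  fmap a b (gbr K 1 8) = mbr (godd 1) (godd 8) (fmap a b (gb K 1)) (fmap a b (gb K 8)).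
Proof. brtac. Qed.

Lemma br_1_9 (K : numClosedFieldType) (a b : K) (hk : a * b + 1 != 0) (h2 : (2 : K) != 0) :
  fmap a b (gbr K 1 9) = mbr (godd 1) (godd 9) (fmap a b (gb K 1)) (fmap a b (gb K 9)).
Proof. brtac. Qed.

Lemma br_1_10 (K : numClosedFieldType) (a b : K) (hk : a * b + 1 != 0) (h2 : (2 : K) != 0) :
  fmap a b (gbr K 1 10) = mbr (godd 1) (godd 10) (fmap a b (gb K 1)) (fmap a b (gb K 10)).
Proof. brtac. Qed.

Lemma br_1_11 (K : numClosedFieldType) (a b : K) (hk : a * b + 1 != 0) (h2 : (2 : K) != 0) :
  fmap a b (gbr K 1 11) = mbr (godd 1) (godd 11) (fmap a b (gb K 1)) (fmap a b (gb K 11)).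
Proof. brtac. Qed.

Lemma br_1_12 (K : numClosedFieldType) (a b : K) (hk : a * b + 1 != 0) (h2 : (2 : K) != 0) :
  fmap a b (gbr K 1 12) = mbr (godd 1) (godd 12) (fmap a b (gb K 1)) (fmap a b (gb K 12)).
Proof. brtac. Qed.

Lemma br_1_13 (K : numClosedFieldType) (a b : K) (hk : a * b + 1 != 0) (h2 : (2 : K) != 0) :
  fmap a b (gbr K 1 13) = mbr (godd 1) (godd 13) (fmap a b (gb K 1)) (fmap a b (gb K 13)).
Proof. brtac. Qed.

Lemma br_1_14 (K : numClosedFieldType) (a b : K) (hk : a * b + 1 != 0) (h2 : (2 : K) != 0) :
  fmap a b (gbr K 1 14) = mbr (godd 1) (godd 14) (fmap a b (gb K 1)) (fmap a b (gb K 14)).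
Proof. brtac. Qed.

Lemma br_1_15 (K : numClosedFieldType) (a b : K) (hk : a * b + 1 != 0) (h2 : (2 : K) != 0) :
  fmap a b (gbr K 1 15) = mbr (godd 1) (godd 15) (fmap a b (gb K 1)) (fmap a b (gb K 15)).
Proof. brtac. Qed.

Lemma br_1_16 (K : numClosedFieldType) (a b : K) (hk : a * b + 1 != 0) (h2 : (2 : K) != 0) :
  fmap a b (gbr K 1 16) = mbr (godd 1) (godd 16) (fmap a b (gb K 1)) (fmap a b (gb K 16)).
Proof. brtac. Qed.

Lemma br_2_2 (K : numClosedFieldType) (a b : K) (hk : a * b + 1 != 0) (h2 : (2 : K) != 0) :
  fmap a b (gbr K 2 2) = mbr (godd 2) (godd 2) (fmap a b (gb K 2)) (fmap a b (gb K 2)).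
Proof. brtac. Qed.

Lemma br_2_3 (K : numClosedFieldType) (a b : K) (hk : a * b + 1 != 0) (h2 : (2 : K) != 0) :
  fmap a b (gbr K 2 3) = mbr (godd 2) (godd 3) (fmap a b (gb K 2)) (fmap a b (gb K 3)).
Proof. brtac. Qed.

Lemma br_2_4 (K : numClosedFieldType) (a b : K) (hk : a * b + 1 != 0) (h2 : (2 : K) != 0) :
  fmap a b (gbr K 2 4) = mbr (godd 2) (godd 4) (fmap a b (gb K 2)) (fmap a b (gb K 4)).
Proof. brtac. Qed.

Lemma br_2_5 (K : numClosedFieldType) (a b : K) (hk : a * b + 1 != 0) (h2 : (2 : K) != 0) :
  fmap a b (gbr K 2 5) = mbr (godd 2) (godd 5) (fmap a b (gb K 2)) (fmap a b (gb K 5)).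
Proof. brtac. Qed.

Lemma br_2_6 (K : numClosedFieldType) (a b : K) (hk : a * b + 1 != 0) (h2 : (2 : K) != 0) :
  fmap a b (gbr K 2 6) = mbr (godd 2) (godd 6) (fmap a b (gb K 2)) (fmap a b (gb K 6)).
Proof. brtac. Qed.

Lemma br_2_7 (K : numClosedFieldType) (a b : K) (hk : a * b + 1 != 0) (h2 : (2 : K) != 0) :
  fmap a b (gbr K 2 7) = mbr (godd 2) (godd 7) (fmap a b (gb K 2)) (fmap a b (gb K 7)).
Proof. brtac. Qed.

Lemma br_2_8 (K : numClosedFieldType) (a b : K) (hk : a * b + 1 != 0) (h2 : (2 : K) != 0) :
  fmap a b (gbr K 2 8) = mbr (godd 2) (godd 8) (fmap a b (gb K 2)) (fmap a b (gb K 8)).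
Proof. brtac. Qed.

Lemma br_2_9 (K : numClosedFieldType) (a b : K) (hk : a * b + 1 != 0) (h2 : (2 : K) != 0) :
  fmap a b (gbr K 2 9) = mbr (godd 2) (godd 9) (fmap a b (gb K 2)) (fmap a b (gb K 9)).
Proof. brtac. Qed.

Lemma br_2_10 (K : numClosedFieldType) (a b : K) (hk : a * b + 1 != 0) (h2 : (2 : K) != 0) :
  fmap a b (gbr K 2 10) = mbr (godd 2) (godd 10) (fmap a b (gb K 2)) (fmap a b (gb K 10)).
Proof. brtac. Qed.

Lemma br_2_11 (K : numClosedFieldType) (a b : K) (hk : a * b + 1 != 0) (h2 : (2 : K) != 0) :
  fmap a b (gbr K 2 11) = mbr (godd 2) (godd 11) (fmap a b (gb K 2)) (fmap a b (gb K 11)).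
Proof. brtac. Qed.

Lemma br_2_12 (K : numClosedFieldType) (a b : K) (hk : a * b + 1 != 0) (h2 : (2 : K) != 0) :
  fmap a b (gbr K 2 12) = mbr (godd 2) (godd 12) (fmap a b (gb K 2)) (fmap a b (gb K 12)).
Proof. brtac. Qed.

Lemma br_2_13 (K : numClosedFieldType) (a b : K) (hk : a * b + 1 != 0) (h2 : (2 : K) != 0) :
  fmap a b (gbr K 2 13) = mbr (godd 2) (godd 13) (fmap a b (gb K 2)) (fmap a b (gb K 13)).
Proof. brtac. Qed.

Lemma br_2_14 (K : numClosedFieldType) (a b : K) (hk : a * b + 1 != 0) (h2 : (2 : K) != 0) :
  fmap a b (gbr K 2 14) = mbr (godd 2) (godd 14) (fmap a b (gb K 2)) (fmap a b (gb K 14)).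
Proof. brtac. Qed.

Lemma br_2_15 (K : numClosedFieldType) (a b : K) (hk : a * b + 1 != 0) (h2 : (2 : K) != 0) :
  fmap a b (gbr K 2 15) = mbr (godd 2) (godd 15) (fmap a b (gb K 2)) (fmap a b (gb K 15)).
Proof. brtac. Qed.

Lemma br_2_16 (K : numClosedFieldType) (a b : K) (hk : a * b + 1 != 0) (h2 : (2 : K) != 0) :
  fmap a b (gbr K 2 16) = mbr (godd 2) (godd 16) (fmap a b (gb K 2)) (fmap a b (gb K 16)).
Proof. brtac. Qed.

Lemma br_3_3 (K : numClosedFieldType) (a b : K) (hk : a * b + 1 != 0) (h2 : (2 : K) != 0) :
  fmap a b (gbr K 3 3) = mbr (godd 3) (godd 3) (fmap a b (gb K 3)) (fmap a b (gb K 3)).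
Proof. brtac. Qed.

Lemma br_3_4 (K : numClosedFieldType) (a b : K) (hk : a * b + 1 != 0) (h2 : (2 : K) != 0) :
  fmap a b (gbr K 3 4) = mbr (godd 3) (godd 4) (fmap a b (gb K 3)) (fmap a b (gb K 4)).
Proof. brtac. Qed.

Lemma br_3_5 (K : numClosedFieldType) (a b : K) (hk : a * b + 1 != 0) (h2 : (2 : K) != 0) :
  fmap a b (gbr K 3 5) = mbr (godd 3) (godd 5) (fmap a b (gb K 3)) (fmap a b (gb K 5)).
Proof. brtac. Qed.

Lemma br_3_6 (K : numClosedFieldType) (a b : K) (hk : a * b + 1 != 0) (h2 : (2 : K) != 0) :
  fmap a b (gbr K 3 6) = mbr (godd 3) (godd 6) (fmap a b (gb K 3)) (fmap a b (gb K 6)).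
Proof. brtac. Qed.

Lemma br_3_7 (K : numClosedFieldType) (a b : K) (hk : a * b + 1 != 0) (h2 : (2 : K) != 0) :
  fmap a b (gbr K 3 7) = mbr (godd 3) (godd 7) (fmap a b (gb K 3)) (fmap a b (gb K 7)).
Proof. brtac. Qed.

Lemma br_3_8 (K : numClosedFieldType) (a b : K) (hk : a * b + 1 != 0) (h2 : (2 : K) != 0) :
  fmap a b (gbr K 3 8) = mbr (godd 3) (godd 8) (fmap a b (gb K 3)) (fmap a b (gb K 8)).
Proof. brtac. Qed.

Lemma br_3_9 (K : numClosedFieldType) (a b : K) (hk : a * b + 1 != 0) (h2 : (2 : K) != 0) :
  fmap a b (gbr K 3 9) = mbr (godd 3) (godd 9) (fmap a b (gb K 3)) (fmap a b (gb K 9)).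
Proof. brtac. Qed.

Lemma br_3_10 (K : numClosedFieldType) (a b : K) (hk : a * b + 1 != 0) (h2 : (2 : K) != 0) :
  fmap a b (gbr K 3 10) = mbr (godd 3) (godd 10) (fmap a b (gb K 3)) (fmap a b (gb K 10)).
Proof. brtac. Qed.

Lemma br_3_11 (K : numClosedFieldType) (a b : K) (hk : a * b + 1 != 0) (h2 : (2 : K) != 0) :
  fmap a b (gbr K 3 11) = mbr (godd 3) (godd 11) (fmap a b (gb K 3)) (fmap a b (gb K 11)).
Proof. brtac. Qed.

Lemma br_3_12 (K : numClosedFieldType) (a b : K) (hk : a * b + 1 != 0) (h2 : (2 : K) != 0) :
  fmap a b (gbr K 3 12) = mbr (godd 3) (godd 12) (fmap a b (gb K 3)) (fmap a b (gb K 12)).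
Proof. brtac. Qed.

Lemma br_3_13 (K : numClosedFieldType) (a b : K) (hk : a * b + 1 != 0) (h2 : (2 : K) != 0) :
  fmap a b (gbr K 3 13) = mbr (godd 3) (godd 13) (fmap a b (gb K 3)) (fmap a b (gb K 13)).
Proof. brtac. Qed.

Lemma br_3_14 (K : numClosedFieldType) (a b : K) (hk : a * b + 1 != 0) (h2 : (2 : K) != 0) :
  fmap a b (gbr K 3 14) = mbr (godd 3) (godd 14) (fmap a b (gb K 3)) (fmap a b (gb K 14)).
Proof. brtac. Qed.

Lemma br_3_15 (K : numClosedFieldType) (a b : K) (hk : a * b + 1 != 0) (h2 : (2 : K) != 0) :
  fmap a b (gbr K 3 15) = mbr (godd 3) (godd 15) (fmap a b (gb K 3)) (fmap a b (gb K 15)).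
Proof. brtac. Qed.

Lemma br_3_16 (K : numClosedFieldType) (a b : K) (hk : a * b + 1 != 0) (h2 : (2 : K) != 0) :
  fmap a b (gbr K 3 16) = mbr (godd 3) (godd 16) (fmap a b (gb K 3)) (fmap a b (gb K 16)).
Proof. brtac. Qed.

Lemma br_4_4 (K : numClosedFieldType) (a b : K) (hk : a * b + 1 != 0) (h2 : (2 : K) != 0) :
  fmap a b (gbr K 4 4) = mbr (godd 4) (godd 4) (fmap a b (gb K 4)) (fmap a b (gb K 4)).
Proof. brtac. Qed.

Lemma br_4_5 (K : numClosedFieldType) (a b : K) (hk : a * b + 1 != 0) (h2 : (2 : K) != 0) :
  fmap a b (gbr K 4 5) = mbr (godd 4) (godd 5) (fmap a b (gb K 4)) (fmap a b (gb K 5)).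
Proof. brtac. Qed.

Lemma br_4_6 (K : numClosedFieldType) (a b : K) (hk : a * b + 1 != 0) (h2 : (2 : K) != 0) :
  fmap a b (gbr K 4 6) = mbr (godd 4) (godd 6) (fmap a b (gb K 4)) (fmap a b (gb K 6)).
Proof. brtac. Qed.

Lemma br_4_7 (K : numClosedFieldType) (a b : K) (hk : a * b + 1 != 0) (h2 : (2 : K) != 0) :
  fmap a b (gbr K 4 7) = mbr (godd 4) (godd 7) (fmap a b (gb K 4)) (fmap a b (gb K 7)).
Proof. brtac. Qed.

Lemma br_4_8 (K : numClosedFieldType) (a b : K) (hk : a * b + 1 != 0) (h2 : (2 : K) != 0) :
  fmap a b (gbr K 4 8) = mbr (godd 4) (godd 8) (fmap a b (gb K 4)) (fmap a b (gb K 8)).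
Proof. brtac. Qed.

Lemma br_4_9 (K : numClosedFieldType) (a b : K) (hk : a * b + 1 != 0) (h2 : (2 : K) != 0) :
  fmap a b (gbr K 4 9) = mbr (godd 4) (godd 9) (fmap a b (gb K 4)) (fmap a b (gb K 9)).
Proof. brtac. Qed.

Lemma br_4_10 (K : numClosedFieldType) (a b : K) (hk : a * b + 1 != 0) (h2 : (2 : K) != 0) :
  fmap a b (gbr K 4 10) = mbr (godd 4) (godd 10) (fmap a b (gb K 4)) (fmap a b (gb K 10)).
Proof. brtac. Qed.

Lemma br_4_11 (K : numClosedFieldType) (a b : K) (hk : a * b + 1 != 0) (h2 : (2 : K) != 0) :
  fmap a b (gbr K 4 11) = mbr (godd 4) (godd 11) (fmap a b (gb K 4)) (fmap a b (gb K 11)).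
Proof. brtac. Qed.

Lemma br_4_12 (K : numClosedFieldType) (a b : K) (hk : a * b + 1 != 0) (h2 : (2 : K) != 0) :
  fmap a b (gbr K 4 12) = mbr (godd 4) (godd 12) (fmap a b (gb K 4)) (fmap a b (gb K 12)).
Proof. brtac. Qed.

Lemma br_4_13 (K : numClosedFieldType) (a b : K) (hk : a * b + 1 != 0) (h2 : (2 : K) != 0) :
  fmap a b (gbr K 4 13) = mbr (godd 4) (godd 13) (fmap a b (gb K 4)) (fmap a b (gb K 13)).
Proof. brtac. Qed.

Lemma br_4_14 (K : numClosedFieldType) (a b : K) (hk : a * b + 1 != 0) (h2 : (2 : K) != 0) :
  fmap a b (gbr K 4 14) = mbr (godd 4) (godd 14) (fmap a b (gb K 4)) (fmap a b (gb K 14)).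
Proof. brtac. Qed.

Lemma br_4_15 (K : numClosedFieldType) (a b : K) (hk : a * b + 1 != 0) (h2 : (2 : K) != 0) :
  fmap a b (gbr K 4 15) = mbr (godd 4) (godd 15) (fmap a b (gb K 4)) (fmap a b (gb K 15)).
Proof. brtac. Qed.

Lemma br_4_16 (K : numClosedFieldType) (a b : K) (hk : a * b + 1 != 0) (h2 : (2 : K) != 0) :
  fmap a b (gbr K 4 16) = mbr (godd 4) (godd 16) (fmap a b (gb K 4)) (fmap a b (gb K 16)).
Proof. brtac. Qed.

Lemma br_5_5 (K : numClosedFieldType) (a b : K) (hk : a * b + 1 != 0) (h2 : (2 : K) != 0) :
  fmap a b (gbr K 5 5) = mbr (godd 5) (godd 5) (fmap a b (gb K 5)) (fmap a b (gb K 5)).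
Proof. brtac. Qed.

Lemma br_5_6 (K : numClosedFieldType) (a b : K) (hk : a * b + 1 != 0) (h2 : (2 : K) != 0) :
  fmap a b (gbr K 5 6) = mbr (godd 5) (godd 6) (fmap a b (gb K 5)) (fmap a b (gb K 6)).
Proof. brtac. Qed.

Lemma br_5_7 (K : numClosedFieldType) (a b : K) (hk : a * b + 1 != 0) (h2 : (2 : K) != 0) :
  fmap a b (gbr K 5 7) = mbr (godd 5) (godd 7) (fmap a b (gb K 5)) (fmap a b (gb K 7)).
Proof. brtac. Qed.

Lemma br_5_8 (K : numClosedFieldType) (a b : K) (hk : a * b + 1 != 0) (h2 : (2 : K) != 0) :
  fmap a b (gbr K 5 8) = mbr (godd 5) (godd 8) (fmap a b (gb K 5)) (fmap a b (gb K 8)).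
Proof. brtac. Qed.

Lemma br_5_9 (K : numClosedFieldType) (a b : K) (hk : a * b + 1 != 0) (h2 : (2 : K) != 0) :
  fmap a b (gbr K 5 9) = mbr (godd 5) (godd 9) (fmap a b (gb K 5)) (fmap a b (gb K 9)).
Proof. brtac. Qed.

Lemma br_5_10 (K : numClosedFieldType) (a b : K) (hk : a * b + 1 != 0) (h2 : (2 : K) != 0) :
  fmap a b (gbr K 5 10) = mbr (godd 5) (godd 10) (fmap a b (gb K 5)) (fmap a b (gb K 10)).
Proof. brtac. Qed.

Lemma br_5_11 (K : numClosedFieldType) (a b : K) (hk : a * b + 1 != 0) (h2 : (2 : K) != 0) :
  fmap a b (gbr K 5 11) = mbr (godd 5) (godd 11) (fmap a b (gb K 5)) (fmap a b (gb K 11)).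
Proof. brtac. Qed.

Lemma br_5_12 (K : numClosedFieldType) (a b : K) (hk : a * b + 1 != 0) (h2 : (2 : K) != 0) :
  fmap a b (gbr K 5 12) = mbr (godd 5) (godd 12) (fmap a b (gb K 5)) (fmap a b (gb K 12)).
Proof. brtac. Qed.

Lemma br_5_13 (K : numClosedFieldType) (a b : K) (hk : a * b + 1 != 0) (h2 : (2 : K) != 0) :
  fmap a b (gbr K 5 13) = mbr (godd 5) (godd 13) (fmap a b (gb K 5)) (fmap a b (gb K 13)).
Proof. brtac. Qed.

Lemma br_5_14 (K : numClosedFieldType) (a b : K) (hk : a * b + 1 != 0) (h2 : (2 : K) != 0) :
  fmap a b (gbr K 5 14) = mbr (godd 5) (godd 14) (fmap a b (gb K 5)) (fmap a b (gb K 14)).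
Proof. brtac. Qed.

Lemma br_5_15 (K : numClosedFieldType) (a b : K) (hk : a * b + 1 != 0) (h2 : (2 : K) != 0) :
  fmap a b (gbr K 5 15) = mbr (godd 5) (godd 15) (fmap a b (gb K 5)) (fmap a b (gb K 15)).
Proof. brtac. Qed.

Lemma br_5_16 (K : numClosedFieldType) (a b : K) (hk : a * b + 1 != 0) (h2 : (2 : K) != 0) :
  fmap a b (gbr K 5 16) = mbr (godd 5) (godd 16) (fmap a b (gb K 5)) (fmap a b (gb K 16)).
Proof. brtac. Qed.

Lemma br_6_6 (K : numClosedFieldType) (a b : K) (hk : a * b + 1 != 0) (h2 : (2 : K) != 0) :
  fmap a b (gbr K 6 6) = mbr (godd 6) (godd 6) (fmap a b (gb K 6)) (fmap a b (gb K 6)).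
Proof. brtac. Qed.

Lemma br_6_7 (K : numClosedFieldType) (a b : K) (hk : a * b + 1 != 0) (h2 : (2 : K) != 0) :
  fmap a b (gbr K 6 7) = mbr (godd 6) (godd 7) (fmap a b (gb K 6)) (fmap a b (gb K 7)).
Proof. brtac. Qed.

Lemma br_6_8 (K : numClosedFieldType) (a b : K) (hk : a * b + 1 != 0) (h2 : (2 : K) != 0) :
  fmap a b (gbr K 6 8) = mbr (godd 6) (godd 8) (fmap a b (gb K 6)) (fmap a b (gb K 8)).
Proof. brtac. Qed.

Lemma br_6_9 (K : numClosedFieldType) (a b : K) (hk : a * b + 1 != 0) (h2 : (2 : K) != 0) :
  fmap a b (gbr K 6 9) = mbr (godd 6) (godd 9) (fmap a b (gb K 6)) (fmap a b (gb K 9)).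
Proof. brtac. Qed.

Lemma br_6_10 (K : numClosedFieldType) (a b : K) (hk : a * b + 1 != 0) (h2 : (2 : K) != 0) :
  fmap a b (gbr K 6 10) = mbr (godd 6) (godd 10) (fmap a b (gb K 6)) (fmap a b (gb K 10)).
Proof. brtac. Qed.

Lemma br_6_11 (K : numClosedFieldType) (a b : K) (hk : a * b + 1 != 0) (h2 : (2 : K) != 0) :
  fmap a b (gbr K 6 11) = mbr (godd 6) (godd 11) (fmap a b (gb K 6)) (fmap a b (gb K 11)).
Proof. brtac. Qed.

Lemma br_6_12 (K : numClosedFieldType) (a b : K) (hk : a * b + 1 != 0) (h2 : (2 : K) != 0) :
  fmap a b (gbr K 6 12) = mbr (godd 6) (godd 12) (fmap a b (gb K 6)) (fmap a b (gb K 12)).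
Proof. brtac. Qed.

Lemma br_6_13 (K : numClosedFieldType) (a b : K) (hk : a * b + 1 != 0) (h2 : (2 : K) != 0) :
  fmap a b (gbr K 6 13) = mbr (godd 6) (godd 13) (fmap a b (gb K 6)) (fmap a b (gb K 13)).
Proof. brtac. Qed.

Lemma br_6_14 (K : numClosedFieldType) (a b : K) (hk : a * b + 1 != 0) (h2 : (2 : K) != 0) :
  fmap a b (gbr K 6 14) = mbr (godd 6) (godd 14) (fmap a b (gb K 6)) (fmap a b (gb K 14)).
Proof. brtac. Qed.

Lemma br_6_15 (K : numClosedFieldType) (a b : K) (hk : a * b + 1 != 0) (h2 : (2 : K) != 0) :
  fmap a b (gbr K 6 15) = mbr (godd 6) (godd 15) (fmap a b (gb K 6)) (fmap a b (gb K 15)).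
Proof. brtac. Qed.

Lemma br_6_16 (K : numClosedFieldType) (a b : K) (hk : a * b + 1 != 0) (h2 : (2 : K) != 0) :
  fmap a b (gbr K 6 16) = mbr (godd 6) (godd 16) (fmap a b (gb K 6)) (fmap a b (gb K 16)).
Proof. brtac. Qed.

Lemma br_7_7 (K : numClosedFieldType) (a b : K) (hk : a * b + 1 != 0) (h2 : (2 : K) != 0) :
  fmap a b (gbr K 7 7) = mbr (godd 7) (godd 7) (fmap a b (gb K 7)) (fmap a b (gb K 7)).
Proof. brtac. Qed.

Lemma br_7_8 (K : numClosedFieldType) (a b : K) (hk : a * b + 1 != 0) (h2 : (2 : K) != 0) :
  fmap a b (gbr K 7 8) = mbr (godd 7) (godd 8) (fmap a b (gb K 7)) (fmap a b (gb K 8)).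
Proof. brtac. Qed.

Lemma br_7_9 (K : numClosedFieldType) (a b : K) (hk : a * b + 1 != 0) (h2 : (2 : K) != 0) :
  fmap a b (gbr K 7 9) = mbr (godd 7) (godd 9) (fmap a b (gb K 7)) (fmap a b (gb K 9)).
Proof. brtac. Qed.

Lemma br_7_10 (K : numClosedFieldType) (a b : K) (hk : a * b + 1 != 0) (h2 : (2 : K) != 0) :
  fmap a b (gbr K 7 10) = mbr (godd 7) (godd 10) (fmap a b (gb K 7)) (fmap a b (gb K 10)).
Proof. brtac. Qed.

Lemma br_7_11 (K : numClosedFieldType) (a b : K) (hk : a * b + 1 != 0) (h2 : (2 : K) != 0) :
  fmap a b (gbr K 7 11) = mbr (godd 7) (godd 11) (fmap a b (gb K 7)) (fmap a b (gb K 11)).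
Proof. brtac. Qed.

Lemma br_7_12 (K : numClosedFieldType) (a b : K) (hk : a * b + 1 != 0) (h2 : (2 : K) != 0) :
  fmap a b (gbr K 7 12) = mbr (godd 7) (godd 12) (fmap a b (gb K 7)) (fmap a b (gb K 12)).
Proof. brtac. Qed.

Lemma br_7_13 (K : numClosedFieldType) (a b : K) (hk : a * b + 1 != 0) (h2 : (2 : K) != 0) :
  fmap a b (gbr K 7 13) = mbr (godd 7) (godd 13) (fmap a b (gb K 7)) (fmap a b (gb K 13)).
Proof. brtac. Qed.

Lemma br_7_14 (K : numClosedFieldType) (a b : K) (hk : a * b + 1 != 0) (h2 : (2 : K) != 0) :
  fmap a b (gbr K 7 14) = mbr (godd 7) (godd 14) (fmap a b (gb K 7)) (fmap a b (gb K 14)).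
Proof. brtac. Qed.

Lemma br_7_15 (K : numClosedFieldType) (a b : K) (hk : a * b + 1 != 0) (h2 : (2 : K) != 0) :
  fmap a b (gbr K 7 15) = mbr (godd 7) (godd 15) (fmap a b (gb K 7)) (fmap a b (gb K 15)).
Proof. brtac. Qed.

Lemma br_7_16 (K : numClosedFieldType) (a b : K) (hk : a * b + 1 != 0) (h2 : (2 : K) != 0) :
  fmap a b (gbr K 7 16) = mbr (godd 7) (godd 16) (fmap a b (gb K 7)) (fmap a b (gb K 16)).
Proof. brtac. Qed.

Lemma br_8_8 (K : numClosedFieldType) (a b : K) (hk : a * b + 1 != 0) (h2 : (2 : K) != 0) :
  fmap a b (gbr K 8 8) = mbr (godd 8) (godd 8) (fmap a b (gb K 8)) (fmap a b (gb K 8)).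
Proof. brtac. Qed.

Lemma br_8_9 (K : numClosedFieldType) (a b : K) (hk : a * b + 1 != 0) (h2 : (2 : K) != 0) :
  fmap a b (gbr K 8 9) = mbr (godd 8) (godd 9) (fmap a b (gb K 8)) (fmap a b (gb K 9)).
Proof. brtac. Qed.

Lemma br_8_10 (K : numClosedFieldType) (a b : K) (hk : a * b + 1 != 0) (h2 : (2 : K) != 0) :
  fmap a b (gbr K 8 10) = mbr (godd 8) (godd 10) (fmap a b (gb K 8)) (fmap a b (gb K 10)).
Proof. brtac. Qed.

Lemma br_8_11 (K : numClosedFieldType) (a b : K) (hk : a * b + 1 != 0) (h2 : (2 : K) != 0) :
  fmap a b (gbr K 8 11) = mbr (godd 8) (godd 11) (fmap a b (gb K 8)) (fmap a b (gb K 11)).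
Proof. brtac. Qed.

Lemma br_8_12 (K : numClosedFieldType) (a b : K) (hk : a * b + 1 != 0) (h2 : (2 : K) != 0) :
  fmap a b (gbr K 8 12) = mbr (godd 8) (godd 12) (fmap a b (gb K 8)) (fmap a b (gb K 12)).
Proof. brtac. Qed.

Lemma br_8_13 (K : numClosedFieldType) (a b : K) (hk : a * b + 1 != 0) (h2 : (2 : K) != 0) :
  fmap a b (gbr K 8 13) = mbr (godd 8) (godd 13) (fmap a b (gb K 8)) (fmap a b (gb K 13)).
Proof. brtac. Qed.

Lemma br_8_14 (K : numClosedFieldType) (a b : K) (hk : a * b + 1 != 0) (h2 : (2 : K) != 0) :
  fmap a b (gbr K 8 14) = mbr (godd 8) (godd 14) (fmap a b (gb K 8)) (fmap a b (gb K 14)).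
Proof. brtac. Qed.

Lemma br_8_15 (K : numClosedFieldType) (a b : K) (hk : a * b + 1 != 0) (h2 : (2 : K) != 0) :
  fmap a b (gbr K 8 15) = mbr (godd 8) (godd 15) (fmap a b (gb K 8)) (fmap a b (gb K 15)).
Proof. brtac. Qed.

Lemma br_8_16 (K : numClosedFieldType) (a b : K) (hk : a * b + 1 != 0) (h2 : (2 : K) != 0) :
  fmap a b (gbr K 8 16) = mbr (godd 8) (godd 16) (fmap a b (gb K 8)) (fmap a b (gb K 16)).
Proof. brtac. Qed.

Lemma br_9_9 (K : numClosedFieldType) (a b : K) (hk : a * b + 1 != 0) (h2 : (2 : K) != 0) :
  fmap a b (gbr K 9 9) = mbr (godd 9) (godd 9) (fmap a b (gb K 9)) (fmap a b (gb K 9)).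
Proof. brtac. Qed.

Lemma br_9_10 (K : numClosedFieldType) (a b : K) (hk : a * b + 1 != 0) (h2 : (2 : K) != 0) :
  fmap a b (gbr K 9 10) = mbr (godd 9) (godd 10) (fmap a b (gb K 9)) (fmap a b (gb K 10)).
Proof. brtac. Qed.

Lemma br_9_11 (K : numClosedFieldType) (a b : K) (hk : a * b + 1 != 0) (h2 : (2 : K) != 0) :
  fmap a b (gbr K 9 11) = mbr (godd 9) (godd 11) (fmap a b (gb K 9)) (fmap a b (gb K 11)).
Proof. brtac. Qed.

Lemma br_9_12 (K : numClosedFieldType) (a b : K) (hk : a * b + 1 != 0) (h2 : (2 : K) != 0) :
  fmap a b (gbr K 9 12) = mbr (godd 9) (godd 12) (fmap a b (gb K 9)) (fmap a b (gb K 12)).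
Proof. brtac. Qed.

Lemma br_9_13 (K : numClosedFieldType) (a b : K) (hk : a * b + 1 != 0) (h2 : (2 : K) != 0) :
  fmap a b (gbr K 9 13) = mbr (godd 9) (godd 13) (fmap a b (gb K 9)) (fmap a b (gb K 13)).
Proof. brtac. Qed.

Lemma br_9_14 (K : numClosedFieldType) (a b : K) (hk : a * b + 1 != 0) (h2 : (2 : K) != 0) :
  fmap a b (gbr K 9 14) = mbr (godd 9) (godd 14) (fmap a b (gb K 9)) (fmap a b (gb K 14)).
Proof. brtac. Qed.

Lemma br_9_15 (K : numClosedFieldType) (a b : K) (hk : a * b + 1 != 0) (h2 : (2 : K) != 0) :
  fmap a b (gbr K 9 15) = mbr (godd 9) (godd 15) (fmap a b (gb K 9)) (fmap a b (gb K 15)).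
Proof. brtac. Qed.

Lemma br_9_16 (K : numClosedFieldType) (a b : K) (hk : a * b + 1 != 0) (h2 : (2 : K) != 0) :
  fmap a b (gbr K 9 16) = mbr (godd 9) (godd 16) (fmap a b (gb K 9)) (fmap a b (gb K 16)).
Proof. brtac. Qed.

Lemma br_10_10 (K : numClosedFieldType) (a b : K) (hk : a * b + 1 != 0) (h2 : (2 : K) != 0) :
  fmap a b (gbr K 10 10) = mbr (godd 10) (godd 10) (fmap a b (gb K 10)) (fmap a b (gb K 10)).
Proof. brtac. Qed.

Lemma br_10_11 (K : numClosedFieldType) (a b : K) (hk : a * b + 1 != 0) (h2 : (2 : K) != 0) :
  fmap a b (gbr K 10 11) = mbr (godd 10) (godd 11) (fmap a b (gb K 10)) (fmap a b (gb K 11)).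
Proof. brtac. Qed.

Lemma br_10_12 (K : numClosedFieldType) (a b : K) (hk : a * b + 1 != 0) (h2 : (2 : K) != 0) :
  fmap a b (gbr K 10 12) = mbr (godd 10) (godd 12) (fmap a b (gb K 10)) (fmap a b (gb K 12)).
Proof. brtac. Qed.

Lemma br_10_13 (K : numClosedFieldType) (a b : K) (hk : a * b + 1 != 0) (h2 : (2 : K) != 0) :
  fmap a b (gbr K 10 13) = mbr (godd 10) (godd 13) (fmap a b (gb K 10)) (fmap a b (gb K 13)).
Proof. brtac. Qed.

Lemma br_10_14 (K : numClosedFieldType) (a b : K) (hk : a * b + 1 != 0) (h2 : (2 : K) != 0) :
  fmap a b (gbr K 10 14) = mbr (godd 10) (godd 14) (fmap a b (gb K 10)) (fmap a b (gb K 14)).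
Proof. brtac. Qed.

Lemma br_10_15 (K : numClosedFieldType) (a b : K) (hk : a * b + 1 != 0) (h2 : (2 : K) != 0) :
  fmap a b (gbr K 10 15) = mbr (godd 10) (godd 15) (fmap a b (gb K 10)) (fmap a b (gb K 15)).
Proof. brtac. Qed.

Lemma br_10_16 (K : numClosedFieldType) (a b : K) (hk : a * b + 1 != 0) (h2 : (2 : K) != 0) :
  fmap a b (gbr K 10 16) = mbr (godd 10) (godd 16) (fmap a b (gb K 10)) (fmap a b (gb K 16)).
Proof. brtac. Qed.

Lemma br_11_11 (K : numClosedFieldType) (a b : K) (hk : a * b + 1 != 0) (h2 : (2 : K) != 0) :
  fmap a b (gbr K 11 11) = mbr (godd 11) (godd 11) (fmap a b (gb K 11)) (fmap a b (gb K 11)).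
Proof. brtac. Qed.

Lemma br_11_12 (K : numClosedFieldType) (a b : K) (hk : a * b + 1 != 0) (h2 : (2 : K) != 0) :
  fmap a b (gbr K 11 12) = mbr (godd 11) (godd 12) (fmap a b (gb K 11)) (fmap a b (gb K 12)).
Proof. brtac. Qed.

Lemma br_11_13 (K : numClosedFieldType) (a b : K) (hk : a * b + 1 != 0) (h2 : (2 : K) != 0) :
  fmap a b (gbr K 11 13) = mbr (godd 11) (godd 13) (fmap a b (gb K 11)) (fmap a b (gb K 13)).
Proof. brtac. Qed.

Lemma br_11_14 (K : numClosedFieldType) (a b : K) (hk : a * b + 1 != 0) (h2 : (2 : K) != 0) :
  fmap a b (gbr K 11 14) = mbr (godd 11) (godd 14) (fmap a b (gb K 11)) (fmap a b (gb K 14)).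
Proof. brtac. Qed.

Lemma br_11_15 (K : numClosedFieldType) (a b : K) (hk : a * b + 1 != 0) (h2 : (2 : K) != 0) :
  fmap a b (gbr K 11 15) = mbr (godd 11) (godd 15) (fmap a b (gb K 11)) (fmap a b (gb K 15)).
Proof. brtac. Qed.

Lemma br_11_16 (K : numClosedFieldType) (a b : K) (hk : a * b + 1 != 0) (h2 : (2 : K) != 0) :
  fmap a b (gbr K 11 16) = mbr (godd 11) (godd 16) (fmap a b (gb K 11)) (fmap a b (gb K 16)).
Proof. brtac. Qed.

Lemma br_12_12 (K : numClosedFieldType) (a b : K) (hk : a * b + 1 != 0) (h2 : (2 : K) != 0) :
  fmap a b (gbr K 12 12) = mbr (godd 12) (godd 12) (fmap a b (gb K 12)) (fmap a b (gb K 12)).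
Proof. brtac. Qed.

Lemma br_12_13 (K : numClosedFieldType) (a b : K) (hk : a * b + 1 != 0) (h2 : (2 : K) != 0) :
  fmap a b (gbr K 12 13) = mbr (godd 12) (godd 13) (fmap a b (gb K 12)) (fmap a b (gb K 13)).
Proof. brtac. Qed.

Lemma br_12_14 (K : numClosedFieldType) (a b : K) (hk : a * b + 1 != 0) (h2 : (2 : K) != 0) :
  fmap a b (gbr K 12 14) = mbr (godd 12) (godd 14) (fmap a b (gb K 12)) (fmap a b (gb K 14)).
Proof. brtac. Qed.

Lemma br_12_15 (K : numClosedFieldType) (a b : K) (hk : a * b + 1 != 0) (h2 : (2 : K) != 0) :
  fmap a b (gbr K 12 15) = mbr (godd 12) (godd 15) (fmap a b (gb K 12)) (fmap a b (gb K 15)).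
Proof. brtac. Qed.

Lemma br_12_16 (K : numClosedFieldType) (a b : K) (hk : a * b + 1 != 0) (h2 : (2 : K) != 0) :
  fmap a b (gbr K 12 16) = mbr (godd 12) (godd 16) (fmap a b (gb K 12)) (fmap a b (gb K 16)).
Proof. brtac. Qed.

Lemma br_13_13 (K : numClosedFieldType) (a b : K) (hk : a * b + 1 != 0) (h2 : (2 : K) != 0) :
  fmap a b (gbr K 13 13) = mbr (godd 13) (godd 13) (fmap a b (gb K 13)) (fmap a b (gb K 13)).
Proof. brtac. Qed.

Lemma br_13_14 (K : numClosedFieldType) (a b : K) (hk : a * b + 1 != 0) (h2 : (2 : K) != 0) :
  fmap a b (gbr K 13 14) = mbr (godd 13) (godd 14) (fmap a b (gb K 13)) (fmap a b (gb K 14)).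
Proof. brtac. Qed.

Lemma br_13_15 (K : numClosedFieldType) (a b : K) (hk : a * b + 1 != 0) (h2 : (2 : K) != 0) :
  fmap a b (gbr K 13 15) = mbr (godd 13) (godd 15) (fmap a b (gb K 13)) (fmap a b (gb K 15)).
Proof. brtac. Qed.

Lemma br_13_16 (K : numClosedFieldType) (a b : K) (hk : a * b + 1 != 0) (h2 : (2 : K) != 0) :
  fmap a b (gbr K 13 16) = mbr (godd 13) (godd 16) (fmap a b (gb K 13)) (fmap a b (gb K 16)).
Proof. brtac. Qed.

Lemma br_14_14 (K : numClosedFieldType) (a b : K) (hk : a * b + 1 != 0) (h2 : (2 : K) != 0) :
  fmap a b (gbr K 14 14) = mbr (godd 14) (godd 14) (fmap a b (gb K 14)) (fmap a b (gb K 14)).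
Proof. brtac. Qed.

Lemma br_14_15 (K : numClosedFieldType) (a b : K) (hk : a * b + 1 != 0) (h2 : (2 : K) != 0) :
  fmap a b (gbr K 14 15) = mbr (godd 14) (godd 15) (fmap a b (gb K 14)) (fmap a b (gb K 15)).
Proof. brtac. Qed.

Lemma br_14_16 (K : numClosedFieldType) (a b : K) (hk : a * b + 1 != 0) (h2 : (2 : K) != 0) :
  fmap a b (gbr K 14 16) = mbr (godd 14) (godd 16) (fmap a b (gb K 14)) (fmap a b (gb K 16)).
Proof. brtac. Qed.

Lemma br_15_15 (K : numClosedFieldType) (a b : K) (hk : a * b + 1 != 0) (h2 : (2 : K) != 0) :
  fmap a b (gbr K 15 15) = mbr (godd 15) (godd 15) (fmap a b (gb K 15)) (fmap a b (gb K 15)).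
Proof. brtac. Qed.

Lemma br_15_16 (K : numClosedFieldType) (a b : K) (hk : a * b + 1 != 0) (h2 : (2 : K) != 0) :
  fmap a b (gbr K 15 16) = mbr (godd 15) (godd 16) (fmap a b (gb K 15)) (fmap a b (gb K 16)).
Proof. brtac. Qed.

Lemma br_16_16 (K : numClosedFieldType) (a b : K) (hk : a * b + 1 != 0) (h2 : (2 : K) != 0) :
  fmap a b (gbr K 16 16) = mbr (godd 16) (godd 16) (fmap a b (gb K 16)) (fmap a b (gb K 16)).
Proof. brtac. Qed.


Lemma bigmadd_pt (K : numClosedFieldType) (F : 'I_17 -> smat K) k l p q :
  (\big[@madd K/mzero K]_(m < 17) F m) k l p q = \sum_(m < 17) F m k l p q.
Proof.
apply: (big_ind2 (fun (M : smat K) (s : K) => M k l p q = s)) => //.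
by move=> ? ? ? ? <- <-.
Qed.

Lemma wt_neq0 (K : numClosedFieldType) (a b : K) m :
  a != 0 -> b != 0 -> a * b + 1 != 0 -> a * b - 1 != 0 -> (m < 17)%N -> wt a b m != 0.
Proof.
move=> ha hb hk hm Hm.
have h2 : (2 : K) != 0 by rewrite pnatr_eq0.
have h4 : (4 : K) != 0 by rewrite pnatr_eq0.
have hki : (a * b + 1)^-1 != 0 by rewrite invr_eq0.
case: m Hm => [|[|[|[|[|[|[|[|[|[|[|[|[|[|[|[|[|?]]]]]]]]]]]]]]]]] Hm //=;
  rewrite ?mulf_neq0 ?oppr_eq0 ?oner_eq0 ?mulNr //.
Qed.

Lemma homog (K : numClosedFieldType) (a b : K) (i : 'I_17) :
  mhomog (godd i) (fmap a b (gb K i)).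
Proof.
case: i => i Hi /=; rewrite fgb //.
case: i Hi => [|[|[|[|[|[|[|[|[|[|[|[|[|[|[|[|[|?]]]]]]]]]]]]]]]]] Hi //;
rewrite /mhomog goddE; cbv beta iota delta [Nat.leb];
move=> k l H; apply/funext => p; apply/funext => q; rewrite /mscale /sscale tXq //;
move: H; case: k => -[|[|[|[|?]]]] ? //; case: l => -[|[|[|[|?]]]] ? //= _;
cbv beta iota zeta delta [tx etval szero fst snd]; by rewrite mulr0.
Qed.


Lemma brk (K : numClosedFieldType) (a b : K) (hk : a * b + 1 != 0) (h2 : (2 : K) != 0) (i j : nat) :
  (i < 17)%N -> (j < 17)%N -> (i <= j)%N ->
  fmap a b (gbr K i j) = mbr (godd i) (godd j) (fmap a b (gb K i)) (fmap a b (gb K j)).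
Proof.
move=> Hi Hj Hij.
case: i Hi Hij => [|[|[|[|[|[|[|[|[|[|[|[|[|[|[|[|[|?]]]]]]]]]]]]]]]]] Hi Hij //; case: j Hj Hij => [|[|[|[|[|[|[|[|[|[|[|[|[|[|[|[|[|?]]]]]]]]]]]]]]]]] Hj Hij //.
- exact: br_0_0.
- exact: br_0_1.
- exact: br_0_2.
- exact: br_0_3.
- exact: br_0_4.
- exact: br_0_5.
- exact: br_0_6.
- exact: br_0_7.
- exact: br_0_8.
- exact: br_0_9.
- exact: br_0_10.
- exact: br_0_11.
- exact: br_0_12.
- exact: br_0_13.
- exact: br_0_14.
- exact: br_0_15.
- exact: br_0_16.
- exact: br_1_1.
- exact: br_1_2.
- exact: br_1_3.
- exact: br_1_4.
- exact: br_1_5.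
- exact: br_1_6.
- exact: br_1_7.
- exact: br_1_8.
- exact: br_1_9.
- exact: br_1_10.
- exact: br_1_11.
- exact: br_1_12.
- exact: br_1_13.
- exact: br_1_14.
- exact: br_1_15.
- exact: br_1_16.
- exact: br_2_2.
- exact: br_2_3.
- exact: br_2_4.
- exact: br_2_5.
- exact: br_2_6.
- exact: br_2_7.
- exact: br_2_8.
- exact: br_2_9.
- exact: br_2_10.
- exact: br_2_11.
- exact: br_2_12.
- exact: br_2_13.
- exact: br_2_14.
- exact: br_2_15.
- exact: br_2_16.
- exact: br_3_3.
- exact: br_3_4.
- exact: br_3_5.
- exact: br_3_6.
- exact: br_3_7.
- exact: br_3_8.
- exact: br_3_9.
- exact: br_3_10.
- exact: br_3_11.
- exact: br_3_12.
- exact: br_3_13.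
- exact: br_3_14.
- exact: br_3_15.
- exact: br_3_16.
- exact: br_4_4.
- exact: br_4_5.
- exact: br_4_6.
- exact: br_4_7.
- exact: br_4_8.
- exact: br_4_9.
- exact: br_4_10.
- exact: br_4_11.
- exact: br_4_12.
- exact: br_4_13.
- exact: br_4_14.
- exact: br_4_15.
- exact: br_4_16.
- exact: br_5_5.
- exact: br_5_6.
- exact: br_5_7.
- exact: br_5_8.
- exact: br_5_9.
- exact: br_5_10.
- exact: br_5_11.
- exact: br_5_12.
- exact: br_5_13.
- exact: br_5_14.
- exact: br_5_15.
- exact: br_5_16.
- exact: br_6_6.
- exact: br_6_7.
- exact: br_6_8.
- exact: br_6_9.
- exact: br_6_10.
- exact: br_6_11.
- exact: br_6_12.
- exact: br_6_13.
- exact: br_6_14.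
- exact: br_6_15.
- exact: br_6_16.
- exact: br_7_7.
- exact: br_7_8.
- exact: br_7_9.
- exact: br_7_10.
- exact: br_7_11.
- exact: br_7_12.
- exact: br_7_13.
- exact: br_7_14.
- exact: br_7_15.
- exact: br_7_16.
- exact: br_8_8.
- exact: br_8_9.
- exact: br_8_10.
- exact: br_8_11.
- exact: br_8_12.
- exact: br_8_13.
- exact: br_8_14.
- exact: br_8_15.
- exact: br_8_16.
- exact: br_9_9.
- exact: br_9_10.
- exact: br_9_11.
- exact: br_9_12.
- exact: br_9_13.
- exact: br_9_14.
- exact: br_9_15.
- exact: br_9_16.
- exact: br_10_10.
- exact: br_10_11.
- exact: br_10_12.
- exact: br_10_13.
- exact: br_10_14.
- exact: br_10_15.
- exact: br_10_16.
- exact: br_11_11.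
- exact: br_11_12.
- exact: br_11_13.
- exact: br_11_14.
- exact: br_11_15.
- exact: br_11_16.
- exact: br_12_12.
- exact: br_12_13.
- exact: br_12_14.
- exact: br_12_15.
- exact: br_12_16.
- exact: br_13_13.
- exact: br_13_14.
- exact: br_13_15.
- exact: br_13_16.
- exact: br_14_14.
- exact: br_14_15.
- exact: br_14_16.
- exact: br_15_15.
- exact: br_15_16.
- exact: br_16_16.
Qed.

Lemma gbr_sym (K : numClosedFieldType) (i j : nat) :
  gbr K i j = (- (if godd i && godd j then -1 else 1)) *: gbr K j i.
Proof.
apply/rowP => m; rewrite /gbr andbC !mxE.
by case: (_ && _); rewrite ?mxE; ring.
Qed.

Lemma mbr_sym (K : numClosedFieldType) pi pj (X Y : smat K) :
  mbr pi pj X Y = mscale (- (if pi && pj then -1 else 1)) (mbr pj pi Y X).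
Proof.
do 4 apply/funext => ?; rewrite /mbr /madd /mscale /sadd /sscale andbC.
by case: (_ && _); ring.
Qed.

Lemma brall (K : numClosedFieldType) (a b : K) (hk : a * b + 1 != 0) (h2 : (2 : K) != 0) (i j : 'I_17) :
  fmap a b (gbr K i j) = mbr (godd i) (godd j) (fmap a b (gb K i)) (fmap a b (gb K j)).
Proof.
case: (leqP i j) => Hij; first by apply: brk.
rewrite gbr_sym fZ brk // ?(ltnW Hij) // -mbr_sym //.
Qed.


Definition Gf {K : numClosedFieldType} (a b : K) (z : 'rV[K]_17) (k l : nat) p q (m : nat) :=
  wt a b m * z ord0 (inord m) * etval (tx a b m k l) p q.

Lemma fval2 (K : numClosedFieldType) (a b : K) z (k l : 'I_4) p q :
  fmap a b z k l p q = \sum_(m < 17) Gf a b z k l p q m.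
Proof. by rewrite /fmap; apply: eq_bigr => m _; rewrite tXq // /Gf inord_val. Qed.

Lemma sum17 (K : numClosedFieldType) (G : nat -> K) :
  \sum_(m < 17) G m = G 0%N + G 1%N + G 2%N + G 3%N + G 4%N + G 5%N + G 6%N + G 7%N
   + G 8%N + G 9%N + G 10%N + G 11%N + G 12%N + G 13%N + G 14%N + G 15%N + G 16%N.
Proof. by rewrite !big_ord_recl big_ord0 /= addr0 !addrA. Qed.

Lemma s00 (K : numClosedFieldType) : sone K 0 0 = 1. Proof. by []. Qed.
Lemma s11 (K : numClosedFieldType) : sone K 1 1 = 0. Proof. by []. Qed.
Lemma sm1 (K : numClosedFieldType) : sone K (-1) (-1) = 0. Proof. by []. Qed.
Lemma t00 (K : numClosedFieldType) : ttau K 0 0 = 0. Proof. by []. Qed.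
Lemma t11 (K : numClosedFieldType) : ttau K 1 1 = 1. Proof. by []. Qed.
Lemma tm1 (K : numClosedFieldType) : ttau K (-1) (-1) = 0. Proof. by []. Qed.
Lemma u00 (K : numClosedFieldType) : usym K 0 0 = 0. Proof. by rewrite usymE. Qed.
Lemma u11 (K : numClosedFieldType) : usym K 1 1 = 0. Proof. by rewrite usymE. Qed.
Lemma um1 (K : numClosedFieldType) : usym K (-1) (-1) = 1. Proof. by rewrite usymE /= fact0. Qed.

Lemma solve1 (K : numClosedFieldType) (w c zz : K) : w != 0 -> c != 0 -> w * zz * c = 0 -> zz = 0.
Proof.
move=> hw hc /eqP; rewrite !mulf_eq0 (negbTE hw) (negbTE hc) orbF /=.
by move/eqP.
Qed.

Ltac geteq Hz kk ll pp qq :=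
  let e := fresh "e" in
  have e := Hz (@Ordinal 4 kk isT) (@Ordinal 4 ll isT) pp qq;
  rewrite fval2 sum17 in e;
  cbv beta iota zeta delta [Gf etval tx fst snd nat_of_ord den emb] in e.

Lemma finj (K : numClosedFieldType) (a b : K) :
  a != 0 -> b != 0 -> a * b + 1 != 0 -> a * b - 1 != 0 -> (2 : K) != 0 ->
  injective (fmap a b).
Proof.
move=> ha hb hk hm h2 x y Exy.
have Hz : forall k l p q, fmap a b (x - y) k l p q = 0.
  move=> k l p q; rewrite fD fN Exy /madd /mscale /sadd /sscale; ring.
set z := x - y in Hz.
have W : forall m, (m < 17)%N -> wt a b m != 0 by move=> m; exact: wt_neq0.
have hm1 : (-1 : K) != 0 by rewrite oppr_eq0 oner_eq0.
have h1 : (1 : K) != 0 by rewrite oner_eq0.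
have Z0 : z ord0 (inord 0) = 0.
  geteq Hz 0%N 3%N (0:int) (0:int); rewrite ?(s00, s11, sm1, t00, t11, tm1, u00, u11, um1) in e.
  have := @solve1 K (wt a b 0) (b) (z ord0 (inord 0)) (W 0%N isT) hb; apply; rewrite -e; ring.
have Z1 : z ord0 (inord 1) = 0.
  geteq Hz 0%N 3%N (1:int) (1:int); rewrite ?(s00, s11, sm1, t00, t11, tm1, u00, u11, um1) in e.
  have := @solve1 K (wt a b 1) (-1) (z ord0 (inord 1)) (W 1%N isT) hm1; apply; rewrite -e; ring.
have Z2 : z ord0 (inord 2) = 0.
  geteq Hz 0%N 2%N (1:int) (1:int); rewrite ?(s00, s11, sm1, t00, t11, tm1, u00, u11, um1) in e.
  have := @solve1 K (wt a b 2) (1) (z ord0 (inord 2)) (W 2%N isT) h1; apply; rewrite -e; ring.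
have Z3 : z ord0 (inord 3) = 0.
  geteq Hz 0%N 2%N (0:int) (0:int); rewrite ?(s00, s11, sm1, t00, t11, tm1, u00, u11, um1) in e.
  have := @solve1 K (wt a b 3) (b) (z ord0 (inord 3)) (W 3%N isT) hb; apply; rewrite -e; ring.
have Z4 : z ord0 (inord 4) = 0.
  geteq Hz 1%N 2%N (1:int) (1:int); rewrite ?(s00, s11, sm1, t00, t11, tm1, u00, u11, um1) in e.
  have := @solve1 K (wt a b 4) (-1) (z ord0 (inord 4)) (W 4%N isT) hm1; apply; rewrite -e; ring.
have Z5 : z ord0 (inord 5) = 0.
  geteq Hz 1%N 2%N (0:int) (0:int); rewrite ?(s00, s11, sm1, t00, t11, tm1, u00, u11, um1) in e.
  have := @solve1 K (wt a b 5) (b) (z ord0 (inord 5)) (W 5%N isT) hb; apply; rewrite -e; ring.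
have Z6 : z ord0 (inord 6) = 0.
  geteq Hz 1%N 3%N (0:int) (0:int); rewrite ?(s00, s11, sm1, t00, t11, tm1, u00, u11, um1) in e.
  have := @solve1 K (wt a b 6) (b) (z ord0 (inord 6)) (W 6%N isT) hb; apply; rewrite -e; ring.
have Z7 : z ord0 (inord 7) = 0.
  geteq Hz 1%N 3%N (1:int) (1:int); rewrite ?(s00, s11, sm1, t00, t11, tm1, u00, u11, um1) in e.
  have := @solve1 K (wt a b 7) (1) (z ord0 (inord 7)) (W 7%N isT) h1; apply; rewrite -e; ring.
have Z8 : z ord0 (inord 8) = 0.
  geteq Hz 0%N 1%N (0:int) (0:int); rewrite ?(s00, s11, sm1, t00, t11, tm1, u00, u11, um1) in e.
  have := @solve1 K (wt a b 8) (1) (z ord0 (inord 8)) (W 8%N isT) h1; apply; rewrite -e; ring.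
have Z10 : z ord0 (inord 10) = 0.
  geteq Hz 1%N 0%N (0:int) (0:int); rewrite ?(s00, s11, sm1, t00, t11, tm1, u00, u11, um1) in e.
  have := @solve1 K (wt a b 10) (1) (z ord0 (inord 10)) (W 10%N isT) h1; apply; rewrite -e; ring.
have Z11 : z ord0 (inord 11) = 0.
  geteq Hz 3%N 2%N (0:int) (0:int); rewrite ?(s00, s11, sm1, t00, t11, tm1, u00, u11, um1) in e.
  have := @solve1 K (wt a b 11) (1) (z ord0 (inord 11)) (W 11%N isT) h1; apply; rewrite -e; ring.
have Z13 : z ord0 (inord 13) = 0.
  geteq Hz 2%N 3%N (0:int) (0:int); rewrite ?(s00, s11, sm1, t00, t11, tm1, u00, u11, um1) in e.
  have := @solve1 K (wt a b 13) (1) (z ord0 (inord 13)) (W 13%N isT) h1; apply; rewrite -e; ring.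
have Z15 : z ord0 (inord 15) = 0.
  geteq Hz 0%N 0%N (1:int) (1:int); rewrite ?(s00, s11, sm1, t00, t11, tm1, u00, u11, um1) in e.
  have := @solve1 K (wt a b 15) (1) (z ord0 (inord 15)) (W 15%N isT) h1; apply; rewrite -e; ring.
have Z16 : z ord0 (inord 16) = 0.
  geteq Hz 0%N 0%N (-1:int) (-1:int); rewrite ?(s00, s11, sm1, t00, t11, tm1, u00, u11, um1) in e.
  have := @solve1 K (wt a b 16) (1) (z ord0 (inord 16)) (W 16%N isT) h1; apply; rewrite -e; ring.
have e1 : wt a b 9 * z ord0 (inord 9) + wt a b 14 * z ord0 (inord 14) = 0.
  geteq Hz 0%N 0%N (0:int) (0:int); rewrite ?(s00, s11, sm1, t00, t11, tm1, u00, u11, um1) in e.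
  rewrite -e; ring.
have e2 : - (wt a b 9 * z ord0 (inord 9)) + wt a b 14 * z ord0 (inord 14) = 0.
  geteq Hz 1%N 1%N (0:int) (0:int); rewrite ?(s00, s11, sm1, t00, t11, tm1, u00, u11, um1) in e.
  rewrite -e; ring.
have e4 : wt a b 12 * z ord0 (inord 12) + wt a b 14 * z ord0 (inord 14) = 0.
  geteq Hz 2%N 2%N (0:int) (0:int); rewrite ?(s00, s11, sm1, t00, t11, tm1, u00, u11, um1) in e.
  rewrite -e; ring.
have Z14 : z ord0 (inord 14) = 0.
  have e3 : wt a b 14 * z ord0 (inord 14) * 2 =
    (wt a b 9 * z ord0 (inord 9) + wt a b 14 * z ord0 (inord 14)) +
    (- (wt a b 9 * z ord0 (inord 9)) + wt a b 14 * z ord0 (inord 14)) by ring.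
  rewrite e1 e2 addr0 in e3.
  exact: (@solve1 K (wt a b 14) 2 (z ord0 (inord 14)) (W 14%N isT) h2 e3).
have Z9 : z ord0 (inord 9) = 0.
  rewrite Z14 mulr0 addr0 -(mulr1 (_ * _)) in e1.
  exact: (@solve1 K (wt a b 9) 1 (z ord0 (inord 9)) (W 9%N isT) h1 e1).
have Z12 : z ord0 (inord 12) = 0.
  rewrite Z14 mulr0 addr0 -(mulr1 (_ * _)) in e4.
  exact: (@solve1 K (wt a b 12) 1 (z ord0 (inord 12)) (W 12%N isT) h1 e4).
have Z : forall m : 'I_17, z ord0 m = 0.
  move=> [m Hm]; have -> : Ordinal Hm = inord m by apply: val_inj; rewrite /= inordK.
  by case: m Hm => [|[|[|[|[|[|[|[|[|[|[|[|[|[|[|[|[|?]]]]]]]]]]]]]]]]] Hm.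
apply/matrixP => i m; rewrite (ord1 i); apply/eqP; rewrite -subr_eq0; apply/eqP.
by have := Z m; rewrite /z !mxE.
Qed.


Lemma spanE (K : numClosedFieldType) (a b : K) :
  a != 0 -> b != 0 -> a * b + 1 != 0 -> a * b - 1 != 0 ->
  forall X : smat K, (exists x, fmap a b x = X) <-> in_span a b X.
Proof.
move=> ha hb hk hm X; split.
  move=> [x <-]; exists (fun k : 'I_17 => wt a b k * x ord0 k).
  apply/funext => k; apply/funext => l; apply/funext => p; apply/funext => q.
  rewrite bigmadd_pt /fmap; apply: eq_bigr => m _; rewrite /mscale /sscale; ring.
move=> [c ->]; exists (\row_k (c k / wt a b k)).
apply/funext => k; apply/funext => l; apply/funext => p; apply/funext => q.
rewrite bigmadd_pt /fmap; apply: eq_bigr => m _; rewrite mxE /mscale /sscale.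
by rewrite [wt a b m * _]mulrC divfK // wt_neq0.
Qed.

Theorem theorem4p2 (K : numClosedFieldType) (a b : K)
  (hab0 : a * b != 0) (hab1 : a * b != 1) (hab2 : a * b != -1) :
  exists f : 'rV[K]_17 -> smat K,
    (forall x y, f (x + y) = madd (f x) (f y)) /\
        (forall (c : K) x, f (c *: x) = mscale c (f x)) /\
        (forall i : 'I_17, mhomog (godd i) (f (gb K i))) /\
        (forall i j : 'I_17,
            f (gbr K i j) = mbr (godd i) (godd j) (f (gb K i)) (f (gb K j))) /\
        injective f /\
        (forall X : smat K, (exists x, f x = X) <-> in_span a b X).
Proof.
have [ha hb] : a != 0 /\ b != 0.
  by move: hab0; rewrite mulf_eq0 negb_or => /andP.
have hk : a * b + 1 != 0 by rewrite addr_eq0.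
have hm : a * b - 1 != 0 by rewrite subr_eq0.
have h2 : (2 : K) != 0 by rewrite pnatr_eq0.
exists (fmap a b); split; first exact: fD.
split; first exact: fZ.
split; first exact: homog.
split; first exact: brall.
split; first exact: finj.
exact: spanE.
Qed.
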